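(* A marker-per-face strategy with point-plane data does not uniquely determine a non-convex polyhedron: there exist two distinct non-convex polyhedra $P\neq Q$ in $\mathbb{R}^3$ and a finite set $M$ of point-plane markers that is a marker-per-face markup of both $P$ and $Q$. Moreover, the same holds for point-normal data: $M$ can be chosen as a set of point-normal markers that is a marker-per-face markup of both $P$ and $Q$.
   Context: A polyhedron is a closed, connected, three-dimensional region of $\mathbb{R}^3$ whose boundary consists of finitely many polygons (faces) such that every edge of every face is shared with exactly one other face, two faces intersect only in shared edges or vertices, and the faces sharing a vertex can be cyclically ordered so that consecutive faces share an edge. Faces are taken to be maximal: the closures of the connected components of the set of points of $\partial P$ having a neighbourhood in $\partial P$ contained in a single plane. A point-plane marker is a pair $(p,R)$ with $R$ a plane and $p\in R$; a finite set $M$ of such markers is a marker-per-face markup of $P$ if each $(p,R)\in M$ has $p$ on a face $F$ of $P$ with $R$ the plane of $F$, and every face $F$ contains the point of some marker whose plane is the plane of $F$. A point-normal marker is a pair $(p,n)$ with $p\in\mathbb{R}^3$ and $n$ a unit vector; a finite set of them is a marker-per-face markup of $P$ if each $(p,n)$ has $p$ on a face $F$ of $P$ with $n$ the outward unit normal of $P$ on $F$, and every face $F$ contains the point of some marker whose vector is the outward normal of $F$. *)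

(* Defs.v *)
From Stdlib Require Import Reals List Arith.
Import ListNotations.
Open Scope R_scope.

Record vec3 := mkv { vx : R; vy : R; vz : R }.

Definition vadd (a b : vec3) : vec3 := mkv (vx a + vx b) (vy a + vy b) (vz a + vz b).
Definition vsub (a b : vec3) : vec3 := mkv (vx a - vx b) (vy a - vy b) (vz a - vz b).
Definition vscale (t : R) (a : vec3) : vec3 := mkv (t * vx a) (t * vy a) (t * vz a).
Definition dot (a b : vec3) : R := vx a * vx b + vy a * vy b + vz a * vz b.
Definition cross (a b : vec3) : vec3 :=
  mkv (vy a * vz b - vz a * vy b) (vz a * vx b - vx a * vz b) (vx a * vy b - vy a * vx b).
Definition vnorm (a : vec3) : R := sqrt (dot a a).
Definition dist (a b : vec3) : R := vnorm (vsub a b).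
Definition vzero : vec3 := mkv 0 0 0.

Definition pset := vec3 -> Prop.

Definition is_open (U : pset) : Prop :=
  forall x, U x -> exists r, 0 < r /\ forall y, dist x y < r -> U y.
Definition interior (S : pset) : pset :=
  fun x => exists r, 0 < r /\ forall y, dist x y < r -> S y.
Definition closure (S : pset) : pset :=
  fun x => forall r, 0 < r -> exists y, S y /\ dist x y < r.
Definition boundary (S : pset) : pset :=
  fun x => closure S x /\ ~ interior S x.
Definition is_closed (S : pset) : Prop := forall x, closure S x -> S x.
Definition bounded (S : pset) : Prop := exists B, forall x, S x -> vnorm x <= B.

Definition connected (S : pset) : Prop :=
  forall U V : pset, is_open U -> is_open V ->
    (forall x, S x -> U x \/ V x) ->
    (forall x, S x -> U x -> V x -> False) ->
    (forall x, S x -> ~ U x) \/ (forall x, S x -> ~ V x).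

Definition conn_component (A C : pset) : Prop :=
  exists x0, A x0 /\
    forall y, C y <-> exists K : pset,
      connected K /\ (forall z, K z -> A z) /\ K x0 /\ K y.

Definition is_plane (Pl : pset) : Prop :=
  exists (n : vec3) (d : R), n <> vzero /\ forall x, Pl x <-> dot n x = d.

Definition on_seg (a b x : vec3) : Prop :=
  exists t, 0 <= t <= 1 /\ x = vadd a (vscale t (vsub b a)).

Definition convex (S : pset) : Prop :=
  forall x y, S x -> S y -> forall t, 0 <= t <= 1 -> S (vadd x (vscale t (vsub y x))).

Definition vtx (V : list vec3) (i : nat) : vec3 := nth i V vzero.
Definition nxt (V : list vec3) (i : nat) : nat := Nat.modulo (S i) (length V).

Definition chain (V : list vec3) : pset :=
  fun x => exists i, (i < length V)%nat /\ on_seg (vtx V i) (vtx V (nxt V i)) x.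

Definition simple_polygon (V : list vec3) : Prop :=
  (3 <= length V)%nat /\
  (exists Pl, is_plane Pl /\ forall v, In v V -> Pl v) /\
  (forall i, (i < length V)%nat ->
     cross (vsub (vtx V (nxt V i)) (vtx V i))
           (vsub (vtx V (nxt V (nxt V i))) (vtx V (nxt V i))) <> vzero) /\
  (forall i j, (i < length V)%nat -> (j < length V)%nat -> i <> j ->
     forall x, on_seg (vtx V i) (vtx V (nxt V i)) x ->
               on_seg (vtx V j) (vtx V (nxt V j)) x ->
     (j = nxt V i /\ x = vtx V j) \/ (i = nxt V j /\ x = vtx V i)).

(* the closed region of the plane bounded by the polygon: the chain together
   with the points of the plane off the chain whose component in
   (plane minus chain) is bounded *)
Definition polygon_set (V : list vec3) : pset :=
  fun x => chain V x \/
    exists Pl, is_plane Pl /\ (forall v, In v V -> Pl v) /\ Pl x /\ ~ chain V x /\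
      exists B, forall K : pset, connected K ->
        (forall z, K z -> Pl z /\ ~ chain V z) -> K x ->
        forall y, K y -> vnorm y <= B.

Definition is_edge (V : list vec3) (a b : vec3) : Prop :=
  exists i, (i < length V)%nat /\
    ((vtx V i = a /\ vtx V (nxt V i) = b) \/ (vtx V i = b /\ vtx V (nxt V i) = a)).

Definition share_edge (V W : list vec3) : Prop :=
  exists a b, is_edge V a b /\ is_edge W a b.

Definition polyhedron (P : pset) : Prop :=
  is_closed P /\ connected P /\ bounded P /\
  (* three-dimensional region: P is the closure of its interior *)
  (forall x, P x <-> closure (interior P) x) /\
  exists Fs : list (list vec3),
    (forall V, In V Fs -> simple_polygon V) /\
    (forall x, boundary P x <-> exists V, In V Fs /\ polygon_set V x) /\
    (forall i, (i < length Fs)%nat -> forall a b, is_edge (nth i Fs []) a b ->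
       exists j, (j < length Fs)%nat /\ j <> i /\ is_edge (nth j Fs []) a b /\
         forall k, (k < length Fs)%nat -> k <> i -> is_edge (nth k Fs []) a b -> k = j) /\
    (forall i j, (i < length Fs)%nat -> (j < length Fs)%nat -> i <> j ->
       forall x, polygon_set (nth i Fs []) x -> polygon_set (nth j Fs []) x ->
         (exists a b, is_edge (nth i Fs []) a b /\ is_edge (nth j Fs []) a b /\ on_seg a b x) \/
         (In x (nth i Fs []) /\ In x (nth j Fs []))) /\
    (forall v, (exists V, In V Fs /\ In v V) ->
       exists L : list nat, NoDup L /\
         (forall i, In i L <-> (i < length Fs)%nat /\ In v (nth i Fs [])) /\
         forall k, (k < length L)%nat ->
           share_edge (nth (nth k L O) Fs [])
                      (nth (nth (Nat.modulo (S k) (length L)) L O) Fs [])).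

Definition flat_pt (P : pset) : pset :=
  fun x => boundary P x /\ exists r Pl, 0 < r /\ is_plane Pl /\
    forall y, boundary P y -> dist x y < r -> Pl y.

Definition face (P : pset) (F : pset) : Prop :=
  exists C, conn_component (flat_pt P) C /\ forall x, F x <-> closure C x.

Definition plane_of (F Pl : pset) : Prop := is_plane Pl /\ forall x, F x -> Pl x.

Definition outward_normal (P F : pset) (n : vec3) : Prop :=
  vnorm n = 1 /\
  (exists Pl, plane_of F Pl /\ forall y z, Pl y -> Pl z -> dot n (vsub y z) = 0) /\
  forall x, F x -> flat_pt P x ->
    exists r, 0 < r /\ forall t, 0 < t < r ->
      ~ P (vadd x (vscale t n)) /\ P (vsub x (vscale t n)).

Definition pp_marker := (vec3 * pset)%type.
Definition pn_marker := (vec3 * vec3)%type.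

Definition valid_pp_marker (m : pp_marker) : Prop := is_plane (snd m) /\ snd m (fst m).
Definition valid_pn_marker (m : pn_marker) : Prop := vnorm (snd m) = 1.

Definition pp_markup (P : pset) (M : list pp_marker) : Prop :=
  (forall m, In m M -> valid_pp_marker m) /\
  (forall m, In m M -> exists F, face P F /\ F (fst m) /\ plane_of F (snd m)) /\
  (forall F, face P F -> exists m, In m M /\ F (fst m) /\ plane_of F (snd m)).

Definition pn_markup (P : pset) (M : list pn_marker) : Prop :=
  (forall m, In m M -> valid_pn_marker m) /\
  (forall m, In m M -> exists F, face P F /\ F (fst m) /\ outward_normal P F (snd m)) /\
  (forall F, face P F -> exists m, In m M /\ F (fst m) /\ outward_normal P F (snd m)).

(* Main.v *)
From Stdlib Require Import Reals List Lra Lia Classical ZArith Bool Arith.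
Require Import Defs.
Import ListNotations.
Open Scope R_scope.

Lemma sqrt_sq_abs (x : R) : sqrt (x*x) = Rabs x.
Proof. rewrite <- sqrt_Rsqr_abs. reflexivity. Qed.

Lemma abs_le_sqrt3 (a b c : R) : Rabs a <= sqrt (a*a + b*b + c*c).
Proof.
  rewrite <- sqrt_sq_abs. apply sqrt_le_1_alt. nra.
Qed.

Lemma sqrt3_le_sum (a b c : R) : sqrt (a*a + b*b + c*c) <= Rabs a + Rabs b + Rabs c.
Proof.
  assert (Ha := Rabs_pos a). assert (Hb := Rabs_pos b). assert (Hc := Rabs_pos c).
  assert (Ea : Rabs a * Rabs a = a * a) by (rewrite <- Rabs_mult; apply Rabs_pos_eq; nra).
  assert (Eb : Rabs b * Rabs b = b * b) by (rewrite <- Rabs_mult; apply Rabs_pos_eq; nra).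
  assert (Ec : Rabs c * Rabs c = c * c) by (rewrite <- Rabs_mult; apply Rabs_pos_eq; nra).
  rewrite <- (sqrt_square (Rabs a + Rabs b + Rabs c)) by lra.
  apply sqrt_le_1_alt. nra.
Qed.

Lemma dist_x p q : Rabs (vx p - vx q) <= dist p q.
Proof. unfold dist, vnorm, dot, vsub; simpl. apply abs_le_sqrt3. Qed.
Lemma dist_y p q : Rabs (vy p - vy q) <= dist p q.
Proof. unfold dist, vnorm, dot, vsub; simpl.
  replace ((vx p - vx q) * (vx p - vx q) + (vy p - vy q) * (vy p - vy q) + (vz p - vz q) * (vz p - vz q))
   with ((vy p - vy q) * (vy p - vy q) + (vx p - vx q) * (vx p - vx q) + (vz p - vz q) * (vz p - vz q)) by ring.
  apply abs_le_sqrt3. Qed.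
Lemma dist_z p q : Rabs (vz p - vz q) <= dist p q.
Proof. unfold dist, vnorm, dot, vsub; simpl.
  replace ((vx p - vx q) * (vx p - vx q) + (vy p - vy q) * (vy p - vy q) + (vz p - vz q) * (vz p - vz q))
   with ((vz p - vz q) * (vz p - vz q) + (vx p - vx q) * (vx p - vx q) + (vy p - vy q) * (vy p - vy q)) by ring.
  apply abs_le_sqrt3. Qed.

Lemma dist_le_sum p q : dist p q <= Rabs (vx p - vx q) + Rabs (vy p - vy q) + Rabs (vz p - vz q).
Proof. unfold dist, vnorm, dot, vsub; simpl. apply sqrt3_le_sum. Qed.

Lemma norm_x p : Rabs (vx p) <= vnorm p.
Proof. unfold vnorm, dot. apply abs_le_sqrt3. Qed.
Lemma norm_y p : Rabs (vy p) <= vnorm p.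
Proof. unfold vnorm, dot.
  replace (vx p * vx p + vy p * vy p + vz p * vz p) with (vy p * vy p + vx p * vx p + vz p * vz p) by ring.
  apply abs_le_sqrt3. Qed.
Lemma norm_z p : Rabs (vz p) <= vnorm p.
Proof. unfold vnorm, dot.
  replace (vx p * vx p + vy p * vy p + vz p * vz p) with (vz p * vz p + vx p * vx p + vy p * vy p) by ring.
  apply abs_le_sqrt3. Qed.
Lemma norm_le_sum p : vnorm p <= Rabs (vx p) + Rabs (vy p) + Rabs (vz p).
Proof. unfold vnorm, dot. apply sqrt3_le_sum. Qed.

Lemma dist_sym p q : dist p q = dist q p.
Proof. unfold dist, vnorm, dot, vsub; simpl. f_equal. ring. Qed.

Lemma vec_eq a b c a' b' c' : a = a' -> b = b' -> c = c' -> mkv a b c = mkv a' b' c'.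
Proof. intros; subst; reflexivity. Qed.

Lemma dist_small p q r : Rabs (vx p - vx q) < r/3 -> Rabs (vy p - vy q) < r/3 -> Rabs (vz p - vz q) < r/3 -> dist p q < r.
Proof. intros. pose proof (dist_le_sum p q). lra. Qed.

Definition lipc (f : vec3 -> R) := forall p q, Rabs (f p - f q) <= dist p q.

Lemma lipc_x : lipc vx. Proof. intros p q; apply dist_x. Qed.
Lemma lipc_y : lipc vy. Proof. intros p q; apply dist_y. Qed.
Lemma lipc_z : lipc vz. Proof. intros p q; apply dist_z. Qed.

Lemma open_ext (U V : pset) : (forall x, U x <-> V x) -> is_open U -> is_open V.
Proof. intros E H x Vx. destruct (H x (proj2 (E x) Vx)) as [r [hr Hr]].
  exists r; split; auto. intros y hy; apply E; auto. Qed.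

Lemma open_and (U V : pset) : is_open U -> is_open V -> is_open (fun x => U x /\ V x).
Proof. intros HU HV x [Ux Vx]. destruct (HU x Ux) as [r1 [h1 H1]]. destruct (HV x Vx) as [r2 [h2 H2]].
  exists (Rmin r1 r2). split. apply Rmin_glb_lt; auto.
  intros y hy. split; [apply H1|apply H2]; pose proof (Rmin_l r1 r2); pose proof (Rmin_r r1 r2); lra. Qed.

Lemma open_or (U V : pset) : is_open U -> is_open V -> is_open (fun x => U x \/ V x).
Proof. intros HU HV x [Ux|Vx].
  destruct (HU x Ux) as [r1 [h1 H1]]. exists r1; split; auto.
  destruct (HV x Vx) as [r1 [h1 H1]]. exists r1; split; auto. Qed.

Lemma open_true : is_open (fun _ => True).
Proof. intros x _. exists 1; split; [lra|auto]. Qed.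
Lemma open_false : is_open (fun _ => False).
Proof. intros x []. Qed.

Lemma open_lt (f : vec3 -> R) c : lipc f -> is_open (fun p => f p < c).
Proof. intros Hf x hx. exists (c - f x). split. lra. intros y hy.
  pose proof (Hf x y). pose proof (Rle_abs (f y - f x)). rewrite Rabs_minus_sym in H. lra. Qed.
Lemma open_gt (f : vec3 -> R) c : lipc f -> is_open (fun p => c < f p).
Proof. intros Hf x hx. exists (f x - c). split. lra. intros y hy.
  pose proof (Hf x y). pose proof (Rle_abs (f x - f y)). lra. Qed.

Lemma closed_compl_open (S : pset) : is_closed S -> is_open (fun x => ~ S x).
Proof. intros HS x nSx.
  destruct (classic (exists r, 0 < r /\ forall y, dist x y < r -> ~ S y)) as [H|H]; auto.
  exfalso. apply nSx. apply HS. intros r hr.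
  apply NNPP. intro Hn. apply H. exists r. split; auto. intros y hy Sy. apply Hn. exists y; auto. Qed.

Lemma closed_le (f : vec3 -> R) c : lipc f -> is_closed (fun p => f p <= c).
Proof. intros Hf x Hx. apply Rnot_lt_le. intro Hc.
  destruct (Hx (f x - c)) as [y [Hy Hd]]. lra.
  pose proof (Hf x y). pose proof (Rle_abs (f x - f y)). lra. Qed.
Lemma closed_ge (f : vec3 -> R) c : lipc f -> is_closed (fun p => c <= f p).
Proof. intros Hf x Hx. apply Rnot_lt_le. intro Hc.
  destruct (Hx (c - f x)) as [y [Hy Hd]]. lra.
  pose proof (Hf x y). pose proof (Rle_abs (f y - f x)). rewrite Rabs_minus_sym in H. lra. Qed.

Lemma closed_ext (U V : pset) : (forall x, U x <-> V x) -> is_closed U -> is_closed V.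
Proof. intros E H x Hx. apply E. apply H. intros r hr. destruct (Hx r hr) as [y [Vy D]].
  exists y; split; auto; apply E; auto. Qed.

Lemma closed_and (U V : pset) : is_closed U -> is_closed V -> is_closed (fun x => U x /\ V x).
Proof. intros HU HV x Hx. split; [apply HU|apply HV]; intros r hr; destruct (Hx r hr) as [y [[Uy Vy] D]];
  exists y; auto. Qed.

Lemma closed_or (U V : pset) : is_closed U -> is_closed V -> is_closed (fun x => U x \/ V x).
Proof. intros HU HV x Hx.
  destruct (classic (U x)) as [?|nU]; auto. destruct (classic (V x)) as [?|nV]; auto. exfalso.
  destruct (closed_compl_open U HU x nU) as [r1 [h1 H1]].
  destruct (closed_compl_open V HV x nV) as [r2 [h2 H2]].
  destruct (Hx (Rmin r1 r2)) as [y [[Uy|Vy] D]]. apply Rmin_glb_lt; auto.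
  apply (H1 y); auto. pose proof (Rmin_l r1 r2); lra.
  apply (H2 y); auto. pose proof (Rmin_r r1 r2); lra. Qed.

Lemma closed_true : is_closed (fun _ => True).
Proof. intros x _; auto. Qed.
Lemma closed_false : is_closed (fun _ => False).
Proof. intros x H. destruct (H 1) as [y [[] _]]. lra. Qed.

Lemma closure_incl (S : pset) x : S x -> closure S x.
Proof. intros Sx r hr. exists x. split; auto. unfold dist, vnorm, dot, vsub. simpl.
  replace ((vx x - vx x) * (vx x - vx x) + (vy x - vy x) * (vy x - vy x) + (vz x - vz x) * (vz x - vz x)) with 0 by ring.
  rewrite sqrt_0; auto. Qed.

Lemma closure_mono (S T : pset) : (forall x, S x -> T x) -> forall x, closure S x -> closure T x.
Proof. intros H x Hx r hr. destruct (Hx r hr) as [y [Sy D]]. exists y; auto. Qed.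

Lemma interior_open (U S : pset) : is_open U -> (forall x, U x -> S x) -> forall x, U x -> interior S x.
Proof. intros HU HS x Ux. destruct (HU x Ux) as [r [hr H]]. exists r; split; auto. Qed.

Lemma interior_incl (S : pset) x : interior S x -> S x.
Proof. intros [r [hr H]]. apply H. unfold dist, vnorm, dot, vsub. simpl.
  replace ((vx x - vx x) * (vx x - vx x) + (vy x - vy x) * (vy x - vy x) + (vz x - vz x) * (vz x - vz x)) with 0 by ring.
  rewrite sqrt_0; auto. Qed.

Lemma ex_in_not (S U : pset) : ~ (forall x, S x -> ~ U x) -> exists x, S x /\ U x.
Proof. intro H. apply NNPP. intro H2. apply H. intros x Sx Ux. apply H2. exists x; auto. Qed.

Lemma convex_connected (S : pset) : convex S -> connected S.
Proof.
  intros Hc U V HU HV Hcov Hdis.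
  destruct (classic (forall x, S x -> ~U x)) as [H|H]; [left; auto|].
  destruct (classic (forall x, S x -> ~V x)) as [H'|H']; [right; auto|].
  exfalso. destruct (ex_in_not _ _ H) as [a [Sa Ua]]. destruct (ex_in_not _ _ H') as [b [Sb Vb]].
  set (g := fun t => vadd a (vscale t (vsub b a))).
  assert (Hg : forall t, 0 <= t <= 1 -> S (g t)) by (intros; apply Hc; auto).
  assert (Hg0 : g 0 = a) by (unfold g; destruct a, b; unfold vadd, vscale, vsub; simpl; f_equal; ring).
  assert (Hg1 : g 1 = b) by (unfold g; destruct a, b; unfold vadd, vscale, vsub; simpl; f_equal; ring).
  set (L := Rabs (vx (vsub b a)) + Rabs (vy (vsub b a)) + Rabs (vz (vsub b a))).
  assert (HL : 0 <= L) by (unfold L; pose proof (Rabs_pos (vx (vsub b a))); pose proof (Rabs_pos (vy (vsub b a))); pose proof (Rabs_pos (vz (vsub b a))); lra).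
  assert (Hd : forall s t, dist (g s) (g t) <= Rabs (s - t) * L).
  { intros s t. eapply Rle_trans. apply dist_le_sum. unfold g, L, vadd, vscale, vsub; simpl.
    replace (vx a + s * (vx b - vx a) - (vx a + t * (vx b - vx a))) with ((s - t) * (vx b - vx a)) by ring.
    replace (vy a + s * (vy b - vy a) - (vy a + t * (vy b - vy a))) with ((s - t) * (vy b - vy a)) by ring.
    replace (vz a + s * (vz b - vz a) - (vz a + t * (vz b - vz a))) with ((s - t) * (vz b - vz a)) by ring.
    rewrite !Rabs_mult. lra. }
  set (E := fun t => 0 <= t <= 1 /\ forall s, 0 <= s <= t -> U (g s)).
  assert (HE0 : E 0). { split. lra. intros s hs. replace s with 0 by lra. rewrite Hg0; auto. }
  assert (HEb : bound E). { exists 1. intros t [ht _]. lra. }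
  destruct (completeness E HEb (ex_intro _ 0 HE0)) as [m [Hub Hlub]].
  assert (Hm0 : 0 <= m) by (apply Hub; auto).
  assert (Hm1 : m <= 1) by (apply Hlub; intros t [ht _]; lra).
  assert (Hbelow : forall s, 0 <= s < m -> U (g s)).
  { intros s hs. apply NNPP; intro nU.
    assert (Hs : is_upper_bound E s).
    { intros t Et. apply Rnot_lt_le. intro lt. apply nU. destruct Et as [_ Et]. apply Et. lra. }
    pose proof (Hlub s Hs). lra. }
  assert (HM : 0 < L + 1) by lra.
  destruct (Hcov (g m) (Hg m (conj Hm0 Hm1))) as [Um|Vm].
  - destruct (HU (g m) Um) as [r [hr Hr]].
    destruct (Req_dec m 1) as [e|ne].
    + subst m. rewrite Hg1 in Um. exact (Hdis b Sb Um Vb).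
    + set (t := Rmin 1 (m + r / (2 * (L + 1)))).
      assert (Hpos : 0 < r / (2 * (L + 1))) by (apply Rdiv_lt_0_compat; lra).
      assert (Ht1 : t <= 1) by apply Rmin_l.
      assert (Ht2 : t <= m + r / (2 * (L + 1))) by apply Rmin_r.
      assert (Htm : m < t) by (unfold t; apply Rmin_glb_lt; lra).
      assert (Et : E t).
      { split. lra. intros s hs. destruct (Rlt_le_dec s m) as [l|l]. apply Hbelow; lra.
        apply Hr. eapply Rle_lt_trans. apply Hd. rewrite Rabs_left1 by lra.
        assert (Hk : (- (m - s)) * L <= r / (2 * (L + 1)) * L) by (apply Rmult_le_compat_r; lra).
        assert (Hk2 : r / (2 * (L + 1)) * L < r).
        { unfold Rdiv. replace (r * / (2 * (L + 1)) * L) with (r * (L / (2 * (L+1)))) by (field; lra).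
          assert (L / (2 * (L + 1)) < 1). { apply (Rmult_lt_reg_r (2 * (L+1))). lra. unfold Rdiv. rewrite Rmult_assoc, Rinv_l by lra. lra. }
          nra. }
        lra. }
      pose proof (Hub t Et). lra.
  - destruct (HV (g m) Vm) as [r [hr Hr]].
    destruct (Req_dec m 0) as [e|ne].
    + subst m. rewrite Hg0 in Vm. exact (Hdis a Sa Ua Vm).
    + set (s := Rmax 0 (m - r / (2 * (L + 1)))).
      assert (Hpos : 0 < r / (2 * (L + 1))) by (apply Rdiv_lt_0_compat; lra).
      assert (Hs0 : 0 <= s) by apply Rmax_l.
      assert (Hs2 : m - r / (2 * (L + 1)) <= s) by apply Rmax_r.
      assert (Hsm : s < m) by (unfold s; apply Rmax_lub_lt; lra).
      apply (Hdis (g s)). apply Hg; lra. apply Hbelow; lra.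
      apply Hr. eapply Rle_lt_trans. apply Hd. rewrite Rabs_right by lra.
      assert (Hk : (m - s) * L <= r / (2 * (L + 1)) * L) by (apply Rmult_le_compat_r; lra).
      assert (Hk2 : r / (2 * (L + 1)) * L < r).
      { unfold Rdiv. replace (r * / (2 * (L + 1)) * L) with (r * (L / (2 * (L+1)))) by (field; lra).
        assert (L / (2 * (L + 1)) < 1). { apply (Rmult_lt_reg_r (2 * (L+1))). lra. unfold Rdiv. rewrite Rmult_assoc, Rinv_l by lra. lra. }
        nra. }
      lra.
Qed.

Lemma connected_ext (A B : pset) : (forall x, A x <-> B x) -> connected A -> connected B.
Proof. intros E H U V HU HV Hc Hd.
  destruct (H U V HU HV) as [H1|H1].
  intros x Ax; apply Hc; apply E; auto.
  intros x Ax; apply Hd; apply E; auto.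
  left; intros x Bx; apply H1; apply E; auto.
  right; intros x Bx; apply H1; apply E; auto. Qed.

Lemma connected_union (A B : pset) : connected A -> connected B -> (exists x, A x /\ B x) ->
  connected (fun x => A x \/ B x).
Proof. intros HA HB [x0 [A0 B0]] U V HU HV Hc Hd.
  destruct (HA U V HU HV (fun x h => Hc x (or_introl h)) (fun x h => Hd x (or_introl h))) as [H1|H1];
  destruct (HB U V HU HV (fun x h => Hc x (or_intror h)) (fun x h => Hd x (or_intror h))) as [H2|H2].
  - left. intros x [h|h]; auto.
  - exfalso. destruct (Hc x0 (or_introl A0)) as [u|v]. apply (H1 x0); auto. apply (H2 x0); auto.
  - exfalso. destruct (Hc x0 (or_introl A0)) as [u|v]. apply (H2 x0); auto. apply (H1 x0); auto.
  - right. intros x [h|h]; auto.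
Qed.

Lemma connected_sep (K U V : pset) : connected K -> is_open U -> is_open V ->
  (forall x, K x -> U x \/ V x) -> (forall x, K x -> U x -> V x -> False) ->
  forall x0, K x0 -> U x0 -> forall y, K y -> U y.
Proof. intros HK HU HV Hc Hd x0 K0 U0 y Ky.
  destruct (HK U V HU HV Hc Hd) as [H|H]. exfalso; apply (H x0); auto.
  destruct (Hc y Ky); auto. exfalso; apply (H y); auto. Qed.

Inductive coord := CX | CY | CZ.
Definition gc (i : coord) (p : vec3) : R := match i with CX => vx p | CY => vy p | CZ => vz p end.

Lemma lipc_gc i : lipc (gc i).
Proof. destruct i; simpl; [apply lipc_x|apply lipc_y|apply lipc_z]. Qed.

Inductive fm := FT | FF | FGe (i : coord) (a : Z) | FLe (i : coord) (b : Z) | FGt (i : coord) (a : Z)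
  | FLt (i : coord) (b : Z) | FEq (i : coord) (c : Z) | FAnd (f g : fm) | FOr (f g : fm) | FNot (f : fm).

Fixpoint evalR (f : fm) (p : vec3) : Prop :=
  match f with
  | FT => True | FF => False
  | FGe i a => IZR a <= gc i p
  | FLe i b => gc i p <= IZR b
  | FGt i a => IZR a < gc i p
  | FLt i b => gc i p < IZR b
  | FEq i c => gc i p = IZR c
  | FAnd f g => evalR f p /\ evalR g p
  | FOr f g => evalR f p \/ evalR g p
  | FNot f => ~ evalR f p
  end.

Inductive cell := Below | Pt (n : Z) | Iv (n : Z) | Above.
Definition clo : Z := (-1)%Z.
Definition chi : Z := 3%Z.

Definition csem (c : cell) (r : R) : Prop :=
  match c with
  | Below => r < IZR clo
  | Pt n => r = IZR n
  | Iv n => IZR n < r < IZR (n + 1)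
  | Above => IZR chi < r
  end.

Definition ge_c (a : Z) (c : cell) : bool :=
  match c with Below => false | Pt n => (a <=? n)%Z | Iv n => (a <=? n)%Z | Above => true end.
Definition le_c (b : Z) (c : cell) : bool :=
  match c with Below => true | Pt n => (n <=? b)%Z | Iv n => (n + 1 <=? b)%Z | Above => false end.
Definition gt_c (a : Z) (c : cell) : bool :=
  match c with Below => false | Pt n => (a <? n)%Z | Iv n => (a <=? n)%Z | Above => true end.
Definition lt_c (b : Z) (c : cell) : bool :=
  match c with Below => true | Pt n => (n <? b)%Z | Iv n => (n + 1 <=? b)%Z | Above => false end.
Definition eq_c (k : Z) (c : cell) : bool :=
  match c with Pt n => (n =? k)%Z | _ => false end.

Definition cell3 := (cell * cell * cell)%type.
Definition getc (i : coord) (c : cell3) : cell :=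
  match i with CX => fst (fst c) | CY => snd (fst c) | CZ => snd c end.
Definition csem3 (c : cell3) (p : vec3) : Prop :=
  csem (getc CX c) (vx p) /\ csem (getc CY c) (vy p) /\ csem (getc CZ c) (vz p).

Fixpoint evalC (f : fm) (c : cell3) : bool :=
  match f with
  | FT => true | FF => false
  | FGe i a => ge_c a (getc i c)
  | FLe i b => le_c b (getc i c)
  | FGt i a => gt_c a (getc i c)
  | FLt i b => lt_c b (getc i c)
  | FEq i k => eq_c k (getc i c)
  | FAnd f g => evalC f c && evalC g c
  | FOr f g => evalC f c || evalC g c
  | FNot f => negb (evalC f c)
  end.

Definition inrange (a : Z) : bool := (clo <=? a)%Z && (a <=? chi)%Z.
Fixpoint fm_ok (f : fm) : bool :=
  match f with
  | FT | FF => true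
  | FGe _ a | FLe _ a | FGt _ a | FLt _ a | FEq _ a => inrange a
  | FAnd f g | FOr f g => fm_ok f && fm_ok g
  | FNot f => fm_ok f
  end.

Lemma inrange_spec a : inrange a = true -> IZR clo <= IZR a <= IZR chi.
Proof. unfold inrange. intro H. apply andb_true_iff in H. destruct H as [H1 H2].
  apply Z.leb_le in H1. apply Z.leb_le in H2. split; apply IZR_le; auto. Qed.

Lemma IZR_succ_lt n b : IZR n < IZR b -> IZR (n + 1) <= IZR b.
Proof. intro H. apply lt_IZR in H. apply IZR_le. lia. Qed.

Ltac zb := repeat match goal with
  | |- context [(?a <=? ?b)%Z] => destruct (Z.leb_spec a b)
  | |- context [(?a <? ?b)%Z] => destruct (Z.ltb_spec a b)
  | |- context [(?a =? ?b)%Z] => destruct (Z.eqb_spec a b)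
  end.

Ltac toR := repeat match goal with
  | H : (?x < ?y)%Z |- _ =>
      let H' := fresh in assert (H' : (x + 1 <= y)%Z) by lia; clear H;
      apply IZR_le in H'; rewrite plus_IZR in H'
  | H : (?x <= ?y)%Z |- _ => apply IZR_le in H
  | H : (?x = ?y)%Z |- _ => subst
  end.

Ltac cellt := intros Ha Hc; match goal with cc : cell |- _ => destruct cc end; simpl in *; zb; toR; try rewrite plus_IZR in *;
  split; intro; try discriminate; auto; try lra.

Lemma ge_c_ok a c r : IZR clo <= IZR a <= IZR chi -> csem c r -> (ge_c a c = true <-> IZR a <= r).
Proof. cellt. Qed.
Lemma le_c_ok b c r : IZR clo <= IZR b <= IZR chi -> csem c r -> (le_c b c = true <-> r <= IZR b).
Proof. cellt. Qed.
Lemma gt_c_ok a c r : IZR clo <= IZR a <= IZR chi -> csem c r -> (gt_c a c = true <-> IZR a < r).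
Proof. cellt. Qed.
Lemma lt_c_ok b c r : IZR clo <= IZR b <= IZR chi -> csem c r -> (lt_c b c = true <-> r < IZR b).
Proof. cellt. Qed.
Lemma eq_c_ok k c r : IZR clo <= IZR k <= IZR chi -> csem c r -> (eq_c k c = true <-> r = IZR k).
Proof. cellt.
  - exfalso; apply n0; apply eq_IZR; lra.
  - exfalso. destruct Hc. subst r. try rewrite plus_IZR in *. assert (IZR n < IZR k) by lra.
    assert (H2: IZR k < IZR (n+1)) by (rewrite plus_IZR; lra). apply lt_IZR in H2. match goal with H1 : IZR n < IZR k |- _ => apply lt_IZR in H1 end. lia.
Qed.

Lemma getc_ok i c p : csem3 c p -> csem (getc i c) (gc i p).
Proof. intros [H1 [H2 H3]]. destruct i; simpl; auto. Qed.

Theorem evalC_correct f c p : fm_ok f = true -> csem3 c p -> (evalC f c = true <-> evalR f p).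
Proof.
  intros Hok Hc. induction f; simpl in *.
  - split; auto.
  - split; intro H; [discriminate|contradiction].
  - apply ge_c_ok; auto. apply inrange_spec; auto. apply getc_ok; auto.
  - apply le_c_ok; auto. apply inrange_spec; auto. apply getc_ok; auto.
  - apply gt_c_ok; auto. apply inrange_spec; auto. apply getc_ok; auto.
  - apply lt_c_ok; auto. apply inrange_spec; auto. apply getc_ok; auto.
  - apply eq_c_ok; auto. apply inrange_spec; auto. apply getc_ok; auto.
  - apply andb_true_iff in Hok. destruct Hok. rewrite andb_true_iff. rewrite IHf1, IHf2 by auto. tauto.
  - apply andb_true_iff in Hok. destruct Hok. rewrite orb_true_iff. rewrite IHf1, IHf2 by auto. tauto.
  - rewrite negb_true_iff. rewrite <- IHf by auto. destruct (evalC f c); intuition congruence.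
Qed.

Definition all_cells : list cell :=
  [Below; Pt (-1); Iv (-1); Pt 0; Iv 0; Pt 1; Iv 1; Pt 2; Iv 2; Pt 3; Above].

Lemma cell_exists r : exists c, In c all_cells /\ csem c r.
Proof.
  unfold all_cells, csem, clo, chi.
  destruct (Rlt_le_dec r (-1)). exists Below; simpl; auto.
  destruct (Req_dec r (-1)). exists (Pt (-1)); simpl; auto 20.
  destruct (Rlt_le_dec r 0). exists (Iv (-1)); simpl; split; auto 20; lra.
  destruct (Req_dec r 0). exists (Pt 0); simpl; auto 20.
  destruct (Rlt_le_dec r 1). exists (Iv 0); simpl; split; auto 20; lra.
  destruct (Req_dec r 1). exists (Pt 1); simpl; auto 20.
  destruct (Rlt_le_dec r 2). exists (Iv 1); simpl; split; auto 20; lra.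
  destruct (Req_dec r 2). exists (Pt 2); simpl; auto 20.
  destruct (Rlt_le_dec r 3). exists (Iv 2); simpl; split; auto 20; lra.
  destruct (Req_dec r 3). exists (Pt 3); simpl; auto 20.
  exists Above; simpl; split; auto 20; lra.
Qed.

Definition all3 : list cell3 :=
  flat_map (fun a => flat_map (fun b => map (fun c => (a, b, c)) all_cells) all_cells) all_cells.

Lemma cell3_exists p : exists c, In c all3 /\ csem3 c p.
Proof.
  destruct (cell_exists (vx p)) as [a [Ha Sa]].
  destruct (cell_exists (vy p)) as [b [Hb Sb]].
  destruct (cell_exists (vz p)) as [c [Hc Sc]].
  exists (a, b, c). split. unfold all3. apply in_flat_map. exists a. split; auto.
  apply in_flat_map. exists b. split; auto. apply in_map; auto.
  unfold csem3; simpl; auto.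
Qed.

Definition check (f : fm) : bool := fm_ok f && forallb (evalC f) all3.

Theorem check_sound f : check f = true -> forall p, evalR f p.
Proof.
  unfold check. intros H p. apply andb_true_iff in H. destruct H as [Hok Hall].
  destruct (cell3_exists p) as [c [Hin Hs]].
  rewrite forallb_forall in Hall. apply (evalC_correct f c p Hok Hs). apply Hall; auto.
Qed.

Definition Imp (f g : fm) := FOr (FNot f) g.
Definition Iff (f g : fm) := FAnd (Imp f g) (Imp g f).
Fixpoint Ors (l : list fm) : fm := match l with [] => FF | f :: l' => FOr f (Ors l') end.
Fixpoint Ands (l : list fm) : fm := match l with [] => FT | f :: l' => FAnd f (Ands l') end.

Lemma polyset_char (V : list vec3) (pl RC Inn : pset) (c0 : vec3)
  (Hpl : forall Pl, is_plane Pl -> (forall v, In v V -> Pl v) -> forall x, Pl x <-> pl x)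
  (Hplane : is_plane pl) (HplV : forall v, In v V -> pl v)
  (Hch : forall x, chain V x -> pl x /\ RC x)
  (HRC : is_closed RC)
  (Hio : is_open Inn)
  (Hir : forall x, Inn x -> RC x)
  (Hib : exists B, forall x, pl x -> Inn x -> vnorm x <= B)
  (Hfill : forall x, pl x -> RC x -> ~ chain V x -> Inn x)
  (Hc0 : pl c0 /\ RC c0)
  (Hstar : forall y, pl y -> RC y -> forall s, 0 <= s <= 1 -> RC (vadd c0 (vscale s (vsub y c0))))
  (Hpll : forall x y t, pl x -> pl y -> pl (vadd x (vscale t (vsub x y)))) :
  forall x, polygon_set V x <-> pl x /\ RC x.
Proof.
  intro x. split.
  - intros [Hc|[Pl [HPl [HV [Plx [nch [B HB]]]]]]]. apply Hch; auto.
    assert (plx : pl x) by (apply (Hpl Pl); auto). split; auto.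
    apply NNPP. intro nRC. exfalso.
    set (K := fun y => exists t, 0 <= t /\ y = vadd x (vscale t (vsub x c0))).
    assert (Kconv : convex K).
    { intros y1 y2 [t1 [h1 e1]] [t2 [h2 e2]] s hs. exists (t1 + s * (t2 - t1)). split. nra.
      subst. destruct x, c0. unfold vadd, vscale, vsub; simpl. f_equal; ring. }
    assert (Kpl : forall y, K y -> pl y). { intros y [t [ht e]]. subst. apply Hpll; tauto. }
    assert (KnRC : forall y, K y -> ~ RC y).
    { intros y [t [ht e]] RCy. apply nRC.
      assert (E : x = vadd c0 (vscale (/(1+t)) (vsub y c0))).
      { subst y. destruct x, c0. unfold vadd, vscale, vsub; simpl. f_equal; field; lra. }
      rewrite E. apply Hstar; auto. subst y; apply Hpll; tauto.
      split. left; apply Rinv_0_lt_compat; lra. rewrite <- Rinv_1. apply Rinv_le_contravar; lra. }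
    assert (HK := HB K (convex_connected K Kconv)).
    assert (Kx : K x). { exists 0. split. lra. destruct x, c0; unfold vadd, vscale, vsub; simpl; f_equal; ring. }
    assert (Kin : forall z, K z -> Pl z /\ ~ chain V z).
    { intros z Kz. split. apply (Hpl Pl); auto. intro cz. apply (KnRC z Kz). apply Hch; auto. }
    specialize (HK Kin Kx).
    assert (nx : x <> c0). { intro e; subst; tauto. }
    assert (Hgrow : forall (f : vec3 -> R), (forall p, Rabs (f p) <= vnorm p) ->
               (forall p q t, f (vadd p (vscale t (vsub p q))) = f p + t * (f p - f q)) ->
               f x <> f c0 -> False).
    { intros f Hf Hlin hne.
      set (d := Rabs (f x - f c0)). assert (hd : 0 < d) by (apply Rabs_pos_lt; lra).
      set (t := (B + Rabs (f x) + 1) / d).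
      assert (ht : 0 <= t). { unfold t. apply Rmult_le_pos. pose proof (Rabs_pos (f x)).
         assert (0 <= B). { pose proof (HK x Kx). pose proof (Rabs_pos (vx x)). pose proof (norm_x x). lra. } lra.
         left; apply Rinv_0_lt_compat; auto. }
      assert (Ky : K (vadd x (vscale t (vsub x c0)))) by (exists t; split; auto).
      pose proof (HK _ Ky) as Hb. pose proof (Hf (vadd x (vscale t (vsub x c0)))) as Hfb. rewrite Hlin in Hfb.
      assert (Ht : t * d = B + Rabs (f x) + 1) by (unfold t; field; lra).
      assert (Rabs (t * (f x - f c0)) = t * d) by (rewrite Rabs_mult, Rabs_pos_eq by lra; reflexivity).
      pose proof (Rabs_triang_inv (t * (f x - f c0)) (- f x)).
      replace (t * (f x - f c0) - - f x) with (f x + t * (f x - f c0)) in H0 by ring.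
      rewrite Rabs_Ropp in H0. lra. }
    destruct (Req_dec (vx x) (vx c0)).
    destruct (Req_dec (vy x) (vy c0)).
    destruct (Req_dec (vz x) (vz c0)).
    apply nx. destruct x, c0; simpl in *; subst; reflexivity.
    exact (Hgrow vz norm_z (fun p q t => eq_refl) ltac:(assumption)).
    exact (Hgrow vy norm_y (fun p q t => eq_refl) ltac:(assumption)).
    exact (Hgrow vx norm_x (fun p q t => eq_refl) ltac:(assumption)).
  - intros [plx RCx]. destruct (classic (chain V x)) as [ch|nch]; [left; auto|right].
    exists pl. split; auto. split; auto. split; auto. split; auto.
    destruct Hib as [B HB]. exists B. intros K HK Kin Kx y Ky.
    assert (HU := connected_sep K Inn (fun z => ~ RC z) HK Hio (closed_compl_open RC HRC)).
    assert (C1 : forall z, K z -> Inn z \/ (fun z => ~ RC z) z).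
    { intros z Kz. destruct (Kin z Kz) as [plz nz]. destruct (classic (RC z)); [left|right]; auto. }
    assert (C2 : forall z, K z -> Inn z -> (fun z => ~ RC z) z -> False).
    { intros z Kz Iz nR. apply nR. apply Hir; auto. }
    apply HB. apply Kin; auto. apply (HU C1 C2 x); auto.
Qed.

Definition ucd (a : coord) := match a with CX => CY | CY => CX | CZ => CX end.
Definition vcd (a : coord) := match a with CX => CZ | CY => CZ | CZ => CY end.
Definition pt (a : coord) (c u v : R) : vec3 :=
  match a with CX => mkv c u v | CY => mkv u c v | CZ => mkv u v c end.

Lemma gc_pt_n a c u v : gc a (pt a c u v) = c. Proof. destruct a; reflexivity. Qed.
Lemma gc_pt_u a c u v : gc (ucd a) (pt a c u v) = u. Proof. destruct a; reflexivity. Qed.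
Lemma gc_pt_v a c u v : gc (vcd a) (pt a c u v) = v. Proof. destruct a; reflexivity. Qed.
Lemma gc_vadd i p q : gc i (vadd p q) = gc i p + gc i q. Proof. destruct i; reflexivity. Qed.
Lemma gc_vsub i p q : gc i (vsub p q) = gc i p - gc i q. Proof. destruct i; reflexivity. Qed.
Lemma gc_vscale i t p : gc i (vscale t p) = t * gc i p. Proof. destruct i; reflexivity. Qed.

Lemma vec_ext a x y : gc a x = gc a y -> gc (ucd a) x = gc (ucd a) y -> gc (vcd a) x = gc (vcd a) y -> x = y.
Proof. destruct a, x, y; simpl; intros; subst; reflexivity. Qed.

Lemma on_seg_coord p q x : on_seg p q x -> exists t, 0 <= t <= 1 /\ forall i, gc i x = gc i p + t * (gc i q - gc i p).
Proof. intros [t [ht e]]. exists t. split; auto. intro i. subst x. rewrite gc_vadd, gc_vscale, gc_vsub. ring. Qed.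

Lemma btw_le i p q x : on_seg p q x -> gc i p <= gc i q -> gc i p <= gc i x <= gc i q.
Proof. intros H h. destruct (on_seg_coord p q x H) as [t [ht e]]. rewrite e.
  assert (0 <= t * (gc i q - gc i p)) by (apply Rmult_le_pos; lra).
  assert (t * (gc i q - gc i p) <= 1 * (gc i q - gc i p)) by (apply Rmult_le_compat_r; lra). lra. Qed.
Lemma btw_ge i p q x : on_seg p q x -> gc i q <= gc i p -> gc i q <= gc i x <= gc i p.
Proof. intros H h. destruct (on_seg_coord p q x H) as [t [ht e]]. rewrite e.
  assert (0 <= t * (gc i p - gc i q)) by (apply Rmult_le_pos; lra).
  assert (t * (gc i p - gc i q) <= 1 * (gc i p - gc i q)) by (apply Rmult_le_compat_r; lra). lra. Qed.

Lemma seg_u a p q x : gc a p = gc a q -> gc (vcd a) p = gc (vcd a) q -> gc (ucd a) p <> gc (ucd a) q ->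
  gc a x = gc a p -> gc (vcd a) x = gc (vcd a) p ->
  (gc (ucd a) p <= gc (ucd a) x <= gc (ucd a) q \/ gc (ucd a) q <= gc (ucd a) x <= gc (ucd a) p) ->
  on_seg p q x.
Proof. intros h1 h2 h3 h4 h5 h6.
  set (d := gc (ucd a) q - gc (ucd a) p). assert (hd : d <> 0) by (unfold d; lra).
  exists ((gc (ucd a) x - gc (ucd a) p) / d). split.
  - destruct (Rlt_le_dec 0 d).
    + split. apply Rmult_le_pos; [unfold d in *; destruct h6; lra| left; apply Rinv_0_lt_compat; lra].
      apply (Rmult_le_reg_r d); auto. unfold Rdiv. rewrite Rmult_assoc, Rinv_l by lra. unfold d in *; destruct h6; lra.
    + assert (d < 0) by lra. split.
      replace ((gc (ucd a) x - gc (ucd a) p) / d) with ((gc (ucd a) p - gc (ucd a) x) / (-d)) by (field; lra).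
      apply Rmult_le_pos; [unfold d in *; destruct h6; lra| left; apply Rinv_0_lt_compat; lra].
      replace ((gc (ucd a) x - gc (ucd a) p) / d) with ((gc (ucd a) p - gc (ucd a) x) / (-d)) by (field; lra).
      apply (Rmult_le_reg_r (-d)); [lra|]. unfold Rdiv. rewrite Rmult_assoc, Rinv_l by lra. unfold d in *; destruct h6; lra.
  - apply (vec_ext a); rewrite gc_vadd, gc_vscale, gc_vsub.
    + rewrite h4, h1. ring.
    + unfold d. field. exact hd.
    + rewrite h5, h2. ring.
Qed.

Lemma seg_v a p q x : gc a p = gc a q -> gc (ucd a) p = gc (ucd a) q -> gc (vcd a) p <> gc (vcd a) q ->
  gc a x = gc a p -> gc (ucd a) x = gc (ucd a) p ->
  (gc (vcd a) p <= gc (vcd a) x <= gc (vcd a) q \/ gc (vcd a) q <= gc (vcd a) x <= gc (vcd a) p) ->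
  on_seg p q x.
Proof. intros h1 h2 h3 h4 h5 h6.
  set (d := gc (vcd a) q - gc (vcd a) p). assert (hd : d <> 0) by (unfold d; lra).
  exists ((gc (vcd a) x - gc (vcd a) p) / d). split.
  - destruct (Rlt_le_dec 0 d).
    + split. apply Rmult_le_pos; [unfold d in *; destruct h6; lra| left; apply Rinv_0_lt_compat; lra].
      apply (Rmult_le_reg_r d); auto. unfold Rdiv. rewrite Rmult_assoc, Rinv_l by lra. unfold d in *; destruct h6; lra.
    + assert (d < 0) by lra. split.
      replace ((gc (vcd a) x - gc (vcd a) p) / d) with ((gc (vcd a) p - gc (vcd a) x) / (-d)) by (field; lra).
      apply Rmult_le_pos; [unfold d in *; destruct h6; lra| left; apply Rinv_0_lt_compat; lra].
      replace ((gc (vcd a) x - gc (vcd a) p) / d) with ((gc (vcd a) p - gc (vcd a) x) / (-d)) by (field; lra).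
      apply (Rmult_le_reg_r (-d)); [lra|]. unfold Rdiv. rewrite Rmult_assoc, Rinv_l by lra. unfold d in *; destruct h6; lra.
  - apply (vec_ext a); rewrite gc_vadd, gc_vscale, gc_vsub.
    + rewrite h4, h1. ring.
    + rewrite h5, h2. ring.
    + unfold d. field. exact hd.
Qed.

Lemma plane_axis a c : is_plane (fun p => gc a p = c).
Proof. exists (pt a 1 0 0), c. split.
  destruct a; simpl; intro H; injection H; intros; lra.
  intro x; destruct a, x; unfold dot; simpl; split; intro; lra. Qed.

Lemma plane3 a c u v u' v' (Pl : pset) : is_plane Pl -> Pl (pt a c u v) -> Pl (pt a c u' v) -> Pl (pt a c u v') ->
  u <> u' -> v <> v' -> forall x, Pl x <-> gc a x = c.
Proof.
  intros [n [d [nz H]]] h1 h2 h3 hu hv x.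
  rewrite H in h1, h2, h3. rewrite H.
  destruct n as [n1 n2 n3]. destruct a; unfold dot in *; simpl in *.
  - assert (n2 = 0). { apply (Rmult_eq_reg_r (u - u')). ring_simplify. lra. lra. }
    assert (n3 = 0). { apply (Rmult_eq_reg_r (v - v')). ring_simplify. lra. lra. }
    subst. assert (n1 <> 0) by (intro; subst; apply nz; reflexivity).
    split; intro e. apply (Rmult_eq_reg_l n1); lra. rewrite e. lra.
  - assert (n1 = 0). { apply (Rmult_eq_reg_r (u - u')). ring_simplify. lra. lra. }
    assert (n3 = 0). { apply (Rmult_eq_reg_r (v - v')). ring_simplify. lra. lra. }
    subst. assert (n2 <> 0) by (intro; subst; apply nz; reflexivity).
    split; intro e. apply (Rmult_eq_reg_l n2); lra. rewrite e. lra.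
  - assert (n1 = 0). { apply (Rmult_eq_reg_r (u - u')). ring_simplify. lra. lra. }
    assert (n2 = 0). { apply (Rmult_eq_reg_r (v - v')). ring_simplify. lra. lra. }
    subst. assert (n3 <> 0) by (intro; subst; apply nz; reflexivity).
    split; intro e. apply (Rmult_eq_reg_l n3); lra. rewrite e. lra.
Qed.

Lemma norm_axis a x : vnorm x <= Rabs (gc a x) + Rabs (gc (ucd a) x) + Rabs (gc (vcd a) x).
Proof. pose proof (norm_le_sum x). destruct a; simpl; lra. Qed.

Lemma conv_btw (lo hi a b s : R) : lo <= a <= hi -> lo <= b <= hi -> 0 <= s <= 1 -> lo <= a + s * (b - a) <= hi.
Proof. intros. split; nra. Qed.

Ltac gsimpl := rewrite ?gc_pt_n, ?gc_pt_u, ?gc_pt_v in *.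

Lemma not_box (a b c d U V : R) : ~ (a < U /\ U < b /\ c < V /\ V < d) -> U <= a \/ b <= U \/ V <= c \/ d <= V.
Proof. intro H. destruct (Rle_lt_dec U a); auto. destruct (Rle_lt_dec b U); auto.
  destruct (Rle_lt_dec V c); auto. destruct (Rle_lt_dec d V); auto. exfalso; apply H; auto. Qed.

Ltac split_not := repeat match goal with
  | H : ~ (_ \/ _) |- _ => apply Decidable.not_or in H; destruct H
  | H : ~ False |- _ => clear H
  | H : ~ (_ < _ /\ _ < _ /\ _ < _ /\ _ < _) |- _ => apply not_box in H
  end.
Ltac split_or := repeat match goal with
  | H : _ \/ _ |- _ => destruct H
  | H : False |- _ => destruct H
  | H : _ /\ _ |- _ => destruct H
  end.

Ltac try_seg a :=
  first [ apply (seg_u a); gsimpl; [lra|lra|lra|lra|lra| first [left; split; lra|right; split; lra]]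
        | apply (seg_v a); gsimpl; [lra|lra|lra|lra|lra| first [left; split; lra|right; split; lra]] ].

Ltac try_edge a k := exists k; split; [simpl; lia| unfold vtx, nxt; simpl; try_seg a].

Ltac chain_tac a n :=
  match n with
  | 4 => first [try_edge a 0%nat | try_edge a 1%nat | try_edge a 2%nat | try_edge a 3%nat]
  | 6 => first [try_edge a 0%nat | try_edge a 1%nat | try_edge a 2%nat | try_edge a 3%nat | try_edge a 4%nat | try_edge a 5%nat]
  end.

Ltac btw1 a H :=
  match type of H with on_seg ?p ?q ?x =>
    first [ pose proof (btw_le a p q x H ltac:(gsimpl; lra)) | pose proof (btw_ge a p q x H ltac:(gsimpl; lra)) ];
    first [ pose proof (btw_le (ucd a) p q x H ltac:(gsimpl; lra)) | pose proof (btw_ge (ucd a) p q x H ltac:(gsimpl; lra)) ];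
    first [ pose proof (btw_le (vcd a) p q x H ltac:(gsimpl; lra)) | pose proof (btw_ge (vcd a) p q x H ltac:(gsimpl; lra)) ]
  end.

Ltac pair_tac a :=
  first [ exfalso; gsimpl; lra
        | left; split; [reflexivity | apply (vec_ext a); gsimpl; lra]
        | right; split; [reflexivity | apply (vec_ext a); gsimpl; lra] ].

Section Rect.
Variables (a : coord) (c u0 u1 v0 v1 : R).
Hypotheses (hu : u0 < u1) (hv : v0 < v1).
Definition rV := [pt a c u0 v0; pt a c u1 v0; pt a c u1 v1; pt a c u0 v1].

Lemma rect_ch x : chain rV x -> gc a x = c /\ ((u0 <= gc (ucd a) x /\ gc (ucd a) x <= u1 /\ v0 <= gc (vcd a) x /\ gc (vcd a) x <= v1) \/ False).
Proof. intros [i [hi hs]]. unfold rV, vtx, nxt in *; simpl in hi.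
  do 4 (destruct i as [|i]; [simpl in hs; btw1 a hs; gsimpl; split; [lra| left; lra] |]). lia. Qed.

Lemma rect_fill x : gc a x = c -> ((u0 <= gc (ucd a) x /\ gc (ucd a) x <= u1 /\ v0 <= gc (vcd a) x /\ gc (vcd a) x <= v1) \/ False) ->
  ~ chain rV x -> ((u0 < gc (ucd a) x /\ gc (ucd a) x < u1 /\ v0 < gc (vcd a) x /\ gc (vcd a) x < v1) \/ False).
Proof. intros hN hR nch. apply NNPP. intro nI. apply nch. clear nch. unfold rV, chain.
  split_not. split_or; chain_tac a 4. Qed.

Lemma rect_simple : simple_polygon rV.
Proof. unfold simple_polygon, rV. split; [simpl; lia|]. split.
  { exists (fun p => gc a p = c). split. apply plane_axis. intros v hvv. simpl in hvv. split_or; subst; gsimpl; auto. }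
  split.
  { intros i hi. simpl in hi. unfold vtx, nxt. destruct a;
    do 4 (destruct i as [|i]; [simpl; intro H; injection H; intros; nra|]); lia. }
  intros i j hi hj hij x h1 h2. simpl in hi, hj. unfold vtx, nxt in *.
  do 4 (destruct i as [|i]; [do 4 (destruct j as [|j]; [simpl in h1, h2 |- *; btw1 a h1; btw1 a h2; first [lia | pair_tac a]|]); lia|]); lia.
Qed.
End Rect.

Ltac box_tac := first [left; lra | right; left; lra].

Section L1.
Variables (a : coord) (c u0 u1 u2 v0 v1 v2 : R).
Hypotheses (hu : u0 < u1) (hu' : u1 < u2) (hv : v0 < v1) (hv' : v1 < v2).
Definition l1V := [pt a c u0 v0; pt a c u2 v0; pt a c u2 v1; pt a c u1 v1; pt a c u1 v2; pt a c u0 v2].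
Definition l1RC x := (u0 <= gc (ucd a) x /\ gc (ucd a) x <= u2 /\ v0 <= gc (vcd a) x /\ gc (vcd a) x <= v1) \/
                     ((u0 <= gc (ucd a) x /\ gc (ucd a) x <= u1 /\ v0 <= gc (vcd a) x /\ gc (vcd a) x <= v2) \/ False).
Definition l1In x := (u0 < gc (ucd a) x /\ gc (ucd a) x < u2 /\ v0 < gc (vcd a) x /\ gc (vcd a) x < v1) \/
                     ((u0 < gc (ucd a) x /\ gc (ucd a) x < u1 /\ v0 < gc (vcd a) x /\ gc (vcd a) x < v2) \/ False).

Lemma l1_ch x : chain l1V x -> gc a x = c /\ l1RC x.
Proof. intros [i [hi hs]]. unfold l1V, l1RC, vtx, nxt in *; simpl in hi.
  do 6 (destruct i as [|i]; [simpl in hs; btw1 a hs; gsimpl; split; [lra| box_tac] |]). lia. Qed.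

Lemma l1_fill x : gc a x = c -> l1RC x -> ~ chain l1V x -> l1In x.
Proof. unfold l1RC, l1In. intros hN hR nch. apply NNPP. intro nI. apply nch. clear nch. unfold l1V, chain.
  split_not. split_or; chain_tac a 6. Qed.

Lemma l1_simple : simple_polygon l1V.
Proof. unfold simple_polygon, l1V. split; [simpl; lia|]. split.
  { exists (fun p => gc a p = c). split. apply plane_axis. intros v hvv. simpl in hvv. split_or; subst; gsimpl; auto. }
  split.
  { intros i hi. simpl in hi. unfold vtx, nxt. destruct a;
    do 6 (destruct i as [|i]; [simpl; intro H; injection H; intros; nra|]); lia. }
  intros i j hi hj hij x h1 h2. simpl in hi, hj. unfold vtx, nxt in *.
  do 6 (destruct i as [|i]; [do 6 (destruct j as [|j]; [simpl in h1, h2 |- *; btw1 a h1; btw1 a h2; first [lia | pair_tac a]|]); lia|]); lia.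
Qed.
End L1.

Section L2.
Variables (a : coord) (c u0 u1 u2 v0 v1 v2 : R).
Hypotheses (hu : u0 < u1) (hu' : u1 < u2) (hv : v0 < v1) (hv' : v1 < v2).
Definition l2V := [pt a c u2 v2; pt a c u0 v2; pt a c u0 v1; pt a c u1 v1; pt a c u1 v0; pt a c u2 v0].
Definition l2RC x := (u1 <= gc (ucd a) x /\ gc (ucd a) x <= u2 /\ v0 <= gc (vcd a) x /\ gc (vcd a) x <= v2) \/
                     ((u0 <= gc (ucd a) x /\ gc (ucd a) x <= u2 /\ v1 <= gc (vcd a) x /\ gc (vcd a) x <= v2) \/ False).
Definition l2In x := (u1 < gc (ucd a) x /\ gc (ucd a) x < u2 /\ v0 < gc (vcd a) x /\ gc (vcd a) x < v2) \/
                     ((u0 < gc (ucd a) x /\ gc (ucd a) x < u2 /\ v1 < gc (vcd a) x /\ gc (vcd a) x < v2) \/ False).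

Lemma l2_ch x : chain l2V x -> gc a x = c /\ l2RC x.
Proof. intros [i [hi hs]]. unfold l2V, l2RC, vtx, nxt in *; simpl in hi.
  do 6 (destruct i as [|i]; [simpl in hs; btw1 a hs; gsimpl; split; [lra| box_tac] |]). lia. Qed.

Lemma l2_fill x : gc a x = c -> l2RC x -> ~ chain l2V x -> l2In x.
Proof. unfold l2RC, l2In. intros hN hR nch. apply NNPP. intro nI. apply nch. clear nch. unfold l2V, chain.
  split_not. split_or; chain_tac a 6. Qed.

Lemma l2_simple : simple_polygon l2V.
Proof. unfold simple_polygon, l2V. split; [simpl; lia|]. split.
  { exists (fun p => gc a p = c). split. apply plane_axis. intros v hvv. simpl in hvv. split_or; subst; gsimpl; auto. }
  split.
  { intros i hi. simpl in hi. unfold vtx, nxt. destruct a;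
    do 6 (destruct i as [|i]; [simpl; intro H; injection H; intros; nra|]); lia. }
  intros i j hi hj hij x h1 h2. simpl in hi, hj. unfold vtx, nxt in *.
  do 6 (destruct i as [|i]; [do 6 (destruct j as [|j]; [simpl in h1, h2 |- *; btw1 a h1; btw1 a h2; first [lia | pair_tac a]|]); lia|]); lia.
Qed.
End L2.

Inductive shape := SRect (u0 u1 v0 v1 : Z) | SL1 (u0 u1 u2 v0 v1 v2 : Z) | SL2 (u0 u1 u2 v0 v1 v2 : Z).
Record pface := mkF { fax : coord; fc : Z; fsh : shape; fsg : bool }.

Definition poly2 (s : shape) : list (Z * Z) :=
  match s with
  | SRect u0 u1 v0 v1 => [(u0,v0);(u1,v0);(u1,v1);(u0,v1)]
  | SL1 u0 u1 u2 v0 v1 v2 => [(u0,v0);(u2,v0);(u2,v1);(u1,v1);(u1,v2);(u0,v2)]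
  | SL2 u0 u1 u2 v0 v1 v2 => [(u2,v2);(u0,v2);(u0,v1);(u1,v1);(u1,v0);(u2,v0)]
  end.
Definition boxes (s : shape) : list (Z * Z * Z * Z) :=
  match s with
  | SRect u0 u1 v0 v1 => [(u0,u1,v0,v1)]
  | SL1 u0 u1 u2 v0 v1 v2 => [(u0,u2,v0,v1);(u0,u1,v0,v2)]
  | SL2 u0 u1 u2 v0 v1 v2 => [(u1,u2,v0,v2);(u0,u2,v1,v2)]
  end.
Definition corner (s : shape) : Z * Z :=
  match s with
  | SRect u0 u1 v0 v1 => (u0, v0)
  | SL1 u0 u1 u2 v0 v1 v2 => (u0, v0)
  | SL2 u0 u1 u2 v0 v1 v2 => (u2, v2)
  end.
Definition wf_shape (s : shape) : bool :=
  match s with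
  | SRect u0 u1 v0 v1 => (u0 <? u1)%Z && (v0 <? v1)%Z
  | SL1 u0 u1 u2 v0 v1 v2 | SL2 u0 u1 u2 v0 v1 v2 => (u0 <? u1)%Z && (u1 <? u2)%Z && (v0 <? v1)%Z && (v1 <? v2)%Z
  end.

Definition ptZ (a : coord) (c u v : Z) : Z * Z * Z :=
  match a with CX => (c, u, v) | CY => (u, c, v) | CZ => (u, v, c) end.
Definition vZ (p : Z * Z * Z) : vec3 := let '(x, y, z) := p in mkv (IZR x) (IZR y) (IZR z).
Lemma vZ_pt a c u v : vZ (ptZ a c u v) = pt a (IZR c) (IZR u) (IZR v). Proof. destruct a; reflexivity. Qed.

Definition polyZ (f : pface) : list (Z * Z * Z) := map (fun uv => ptZ (fax f) (fc f) (fst uv) (snd uv)) (poly2 (fsh f)).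
Definition poly (f : pface) : list vec3 := map vZ (polyZ f).

Definition boxF (a : coord) (q : Z * Z * Z * Z) : fm :=
  let '(u0, u1, v0, v1) := q in FAnd (FGe (ucd a) u0) (FAnd (FLe (ucd a) u1) (FAnd (FGe (vcd a) v0) (FLe (vcd a) v1))).
Definition oboxF (a : coord) (q : Z * Z * Z * Z) : fm :=
  let '(u0, u1, v0, v1) := q in FAnd (FGt (ucd a) u0) (FAnd (FLt (ucd a) u1) (FAnd (FGt (vcd a) v0) (FLt (vcd a) v1))).
Definition RCF (f : pface) : fm := Ors (map (boxF (fax f)) (boxes (fsh f))).
Definition InnF (f : pface) : fm := Ors (map (oboxF (fax f)) (boxes (fsh f))).
Definition RegF (f : pface) : fm := FAnd (FEq (fax f) (fc f)) (RCF f).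
Definition RelF (f : pface) : fm := FAnd (FEq (fax f) (fc f)) (InnF f).

Fixpoint closedfm (f : fm) : bool :=
  match f with FT | FF | FGe _ _ | FLe _ _ | FEq _ _ => true | FAnd f g | FOr f g => closedfm f && closedfm g | _ => false end.
Fixpoint openfm (f : fm) : bool :=
  match f with FT | FF | FGt _ _ | FLt _ _ => true | FAnd f g | FOr f g => openfm f && openfm g | _ => false end.

Lemma closedfm_ok f : closedfm f = true -> is_closed (evalR f).
Proof. induction f; simpl; intro H; try discriminate.
  - apply closed_true. - apply closed_false.
  - apply closed_ge, lipc_gc. - apply closed_le, lipc_gc.
  - apply (closed_ext (fun p => gc i p <= IZR c /\ IZR c <= gc i p)). intros; split; intros; lra.
    apply closed_and; [apply closed_le|apply closed_ge]; apply lipc_gc.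
  - apply andb_true_iff in H; destruct H. apply closed_and; auto.
  - apply andb_true_iff in H; destruct H. apply closed_or; auto.
Qed.

Lemma openfm_ok f : openfm f = true -> is_open (evalR f).
Proof. induction f; simpl; intro H; try discriminate.
  - apply open_true. - apply open_false.
  - apply open_gt, lipc_gc. - apply open_lt, lipc_gc.
  - apply andb_true_iff in H; destruct H. apply open_and; auto.
  - apply andb_true_iff in H; destruct H. apply open_or; auto.
Qed.

Lemma RCF_closed f : is_closed (evalR (RCF f)).
Proof. apply closedfm_ok. unfold RCF. destruct f as [a c s g]; simpl. induction (boxes s) as [|q l IH]; simpl; auto.
  destruct q as [[[u0 u1] v0] v1]; simpl. auto. Qed.
Lemma InnF_open f : is_open (evalR (InnF f)).
Proof. apply openfm_ok. unfold InnF. destruct f as [a c s g]; simpl. induction (boxes s) as [|q l IH]; simpl; auto.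
  destruct q as [[[u0 u1] v0] v1]; simpl. auto. Qed.
Lemma RegF_closed f : is_closed (evalR (RegF f)).
Proof. apply (closed_and (fun p => gc (fax f) p = IZR (fc f))).
  apply (closedfm_ok (FEq (fax f) (fc f))); reflexivity. apply RCF_closed. Qed.

Lemma InnF_RCF f x : evalR (InnF f) x -> evalR (RCF f) x.
Proof. unfold InnF, RCF. destruct f as [a c s g]; simpl. induction (boxes s) as [|q l IH]; simpl; auto.
  destruct q as [[[u0 u1] v0] v1]; simpl. intros [H|H]; [left; lra|right; auto]. Qed.

Lemma InnF_bounded f : exists B, forall x, gc (fax f) x = IZR (fc f) -> evalR (InnF f) x -> vnorm x <= B.
Proof. unfold InnF. destruct f as [a c s g]; simpl. induction (boxes s) as [|q l IH]; simpl.
  - exists 0; intros x _ [].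
  - destruct IH as [B HB]. destruct q as [[[u0 u1] v0] v1].
    exists (Rmax B (Rabs (IZR c) + (Rabs (IZR u0) + Rabs (IZR u1)) + (Rabs (IZR v0) + Rabs (IZR v1)))).
    intros x hx [H|H].
    + simpl in H. eapply Rle_trans; [|apply Rmax_r]. eapply Rle_trans. apply (norm_axis a). rewrite hx.
      assert (Rabs (gc (ucd a) x) <= Rabs (IZR u0) + Rabs (IZR u1)) by (unfold Rabs; repeat destruct Rcase_abs; lra).
      assert (Rabs (gc (vcd a) x) <= Rabs (IZR v0) + Rabs (IZR v1)) by (unfold Rabs; repeat destruct Rcase_abs; lra).
      lra.
    + eapply Rle_trans; [|apply Rmax_l]. auto.
Qed.

Lemma star_boxes a (l : list (Z * Z * Z * Z)) c0 :
  (forall q, In q l -> evalR (boxF a q) c0) ->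
  forall y, evalR (Ors (map (boxF a) l)) y -> forall s, 0 <= s <= 1 -> evalR (Ors (map (boxF a) l)) (vadd c0 (vscale s (vsub y c0))).
Proof. induction l as [|q l IH]; simpl; intros Hc y Hy s hs; auto.
  destruct Hy as [Hy|Hy]; [left|right; apply IH; auto].
  assert (Hq := Hc q (or_introl eq_refl)). destruct q as [[[u0 u1] v0] v1]. simpl in *.
  rewrite !gc_vadd, !gc_vscale, !gc_vsub.
  pose proof (conv_btw (IZR u0) (IZR u1) (gc (ucd a) c0) (gc (ucd a) y) s ltac:(lra) ltac:(lra) hs).
  pose proof (conv_btw (IZR v0) (IZR v1) (gc (vcd a) c0) (gc (vcd a) y) s ltac:(lra) ltac:(lra) hs).
  lra.
Qed.

Definition wf_face (f : pface) := wf_shape (fsh f).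

Lemma Zlt_R a b : (a <? b)%Z = true -> IZR a < IZR b.
Proof. intro H. apply IZR_lt. apply Z.ltb_lt; auto. Qed.

Lemma poly_rect a c u0 u1 v0 v1 g : poly (mkF a c (SRect u0 u1 v0 v1) g) = rV a (IZR c) (IZR u0) (IZR u1) (IZR v0) (IZR v1).
Proof. destruct a; reflexivity. Qed.
Lemma poly_l1 a c u0 u1 u2 v0 v1 v2 g : poly (mkF a c (SL1 u0 u1 u2 v0 v1 v2) g) = l1V a (IZR c) (IZR u0) (IZR u1) (IZR u2) (IZR v0) (IZR v1) (IZR v2).
Proof. destruct a; reflexivity. Qed.
Lemma poly_l2 a c u0 u1 u2 v0 v1 v2 g : poly (mkF a c (SL2 u0 u1 u2 v0 v1 v2) g) = l2V a (IZR c) (IZR u0) (IZR u1) (IZR u2) (IZR v0) (IZR v1) (IZR v2).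
Proof. destruct a; reflexivity. Qed.

Theorem face_poly f : wf_face f = true ->
  simple_polygon (poly f) /\ forall x, polygon_set (poly f) x <-> evalR (RegF f) x.
Proof.
  destruct f as [a c s g]. unfold wf_face. simpl. intro W.
  assert (Hpll : forall x y t, gc a x = IZR c -> gc a y = IZR c -> gc a (vadd x (vscale t (vsub x y))) = IZR c).
  { intros x y t h1 h2. rewrite gc_vadd, gc_vscale, gc_vsub. rewrite h1, h2. ring. }
  assert (Hb := InnF_bounded (mkF a c s g)). simpl in Hb.
  assert (Hio := InnF_open (mkF a c s g)). assert (HRC := RCF_closed (mkF a c s g)).
  assert (Hir := InnF_RCF (mkF a c s g)).
  destruct s as [u0 u1 v0 v1|u0 u1 u2 v0 v1 v2|u0 u1 u2 v0 v1 v2];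
    [rewrite poly_rect|rewrite poly_l1|rewrite poly_l2];
    unfold RegF, RCF, InnF in *; simpl in *.
  - apply andb_true_iff in W. destruct W as [W1 W2]. apply Zlt_R in W1, W2.
    split. apply rect_simple; auto.
    intro x.
    match type of HRC with is_closed ?RC => match type of Hio with is_open ?Inn =>
      apply (polyset_char _ (fun p => gc a p = IZR c) RC Inn (pt a (IZR c) (IZR u0) (IZR v0))) end end.
    + intros Pl HPl HV y. apply (plane3 a (IZR c) (IZR u0) (IZR v0) (IZR u1) (IZR v1) Pl); auto; try (apply HV; unfold rV; simpl; tauto); lra.
    + apply plane_axis.
    + intros v hv. unfold rV in hv. simpl in hv. split_or; subst; gsimpl; auto.
    + intros y hy. cbv beta. apply (rect_ch a (IZR c)); auto.
    + exact HRC.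
    + exact Hio.
    + exact Hir.
    + exact Hb.
    + intros y h1 h2 h3. cbv beta in *. apply (rect_fill a (IZR c)); auto.
    + gsimpl. split; auto. left; lra.
    + intros y _ Hy s hs. apply (star_boxes a [(u0,u1,v0,v1)]); auto.
      intros q [<-|[]]; simpl; gsimpl; lra.
    + exact Hpll.
  - apply andb_true_iff in W. destruct W as [W W4]. apply andb_true_iff in W. destruct W as [W W3].
    apply andb_true_iff in W. destruct W as [W1 W2]. apply Zlt_R in W1, W2, W3, W4.
    split. apply l1_simple; auto.
    intro x.
    match type of HRC with is_closed ?RC => match type of Hio with is_open ?Inn =>
      apply (polyset_char _ (fun p => gc a p = IZR c) RC Inn (pt a (IZR c) (IZR u0) (IZR v0))) end end.
    + intros Pl HPl HV y. apply (plane3 a (IZR c) (IZR u0) (IZR v0) (IZR u2) (IZR v2) Pl); auto; try (apply HV; unfold l1V; simpl; tauto); lra.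
    + apply plane_axis.
    + intros v hv. unfold l1V in hv. simpl in hv. split_or; subst; gsimpl; auto.
    + intros y hy. cbv beta. apply (l1_ch a (IZR c)); auto.
    + exact HRC.
    + exact Hio.
    + exact Hir.
    + exact Hb.
    + intros y h1 h2 h3. cbv beta in *. apply (l1_fill a (IZR c)); auto.
    + gsimpl. split; auto. left; lra.
    + intros y _ Hy s hs. apply (star_boxes a [(u0,u2,v0,v1);(u0,u1,v0,v2)]); auto.
      intros q [<-|[<-|[]]]; simpl; gsimpl; lra.
    + exact Hpll.
  - apply andb_true_iff in W. destruct W as [W W4]. apply andb_true_iff in W. destruct W as [W W3].
    apply andb_true_iff in W. destruct W as [W1 W2]. apply Zlt_R in W1, W2, W3, W4.
    split. apply l2_simple; auto.
    intro x.
    match type of HRC with is_closed ?RC => match type of Hio with is_open ?Inn =>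
      apply (polyset_char _ (fun p => gc a p = IZR c) RC Inn (pt a (IZR c) (IZR u2) (IZR v2))) end end.
    + intros Pl HPl HV y. apply (plane3 a (IZR c) (IZR u2) (IZR v2) (IZR u0) (IZR v0) Pl); auto; try (apply HV; unfold l2V; simpl; tauto); lra.
    + apply plane_axis.
    + intros v hv. unfold l2V in hv. simpl in hv. split_or; subst; gsimpl; auto.
    + intros y hy. cbv beta. apply (l2_ch a (IZR c)); auto.
    + exact HRC.
    + exact Hio.
    + exact Hir.
    + exact Hb.
    + intros y h1 h2 h3. cbv beta in *. apply (l2_fill a (IZR c)); auto.
    + gsimpl. split; auto. left; lra.
    + intros y _ Hy s hs. apply (star_boxes a [(u1,u2,v0,v2);(u0,u2,v1,v2)]); auto.
      intros q [<-|[<-|[]]]; simpl; gsimpl; lra.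
    + exact Hpll.
Qed.

Notation pt3 := (Z * Z * Z)%type.
Definition peqb (p q : pt3) : bool :=
  let '(x, y, z) := p in let '(x', y', z') := q in (x =? x')%Z && (y =? y')%Z && (z =? z')%Z.
Lemma peqb_eq p q : peqb p q = true <-> p = q.
Proof. destruct p as [[x y] z], q as [[x' y'] z']; simpl. rewrite !andb_true_iff, !Z.eqb_eq.
  split. intros [[-> ->] ->]; auto. intro H; injection H; auto. Qed.

Lemma vZ_inj p q : vZ p = vZ q -> p = q.
Proof. destruct p as [[x y] z], q as [[x' y'] z']; simpl. intro H; injection H; intros.
  apply eq_IZR in H0, H1, H2. subst; auto. Qed.

Fixpoint inb (p : pt3) (l : list pt3) : bool := match l with [] => false | q :: l' => peqb p q || inb p l' end.
Lemma inb_In p l : inb p l = true <-> In p l.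
Proof. induction l as [|q l IH]; simpl. split; intro; easy.
  rewrite orb_true_iff, IH, peqb_eq. split; intros [H|H]; auto. Qed.

Lemma In_vZ p l : In (vZ p) (map vZ l) <-> In p l.
Proof. rewrite in_map_iff. split. intros [q [e h]]. apply vZ_inj in e. subst; auto. intro h; exists p; auto. Qed.

Definition nxtZ (W : list pt3) (i : nat) := Nat.modulo (S i) (length W).
Definition edgesZ (W : list pt3) : list (pt3 * pt3) :=
  map (fun i => (nth i W (0,0,0)%Z, nth (nxtZ W i) W (0,0,0)%Z)) (seq 0 (length W)).
Definition is_edgeZ (W : list pt3) (p q : pt3) : bool :=
  existsb (fun e => (peqb (fst e) p && peqb (snd e) q) || (peqb (fst e) q && peqb (snd e) p)) (edgesZ W).

Lemma vzero_vZ : vzero = vZ (0,0,0)%Z. Proof. reflexivity. Qed.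

Lemma vtx_vZ W i : vtx (map vZ W) i = vZ (nth i W (0,0,0)%Z).
Proof. unfold vtx. rewrite vzero_vZ. apply map_nth. Qed.
Lemma nxt_vZ W i : nxt (map vZ W) i = nxtZ W i.
Proof. unfold nxt, nxtZ. rewrite length_map. reflexivity. Qed.

Lemma peqb_refl p : peqb p p = true. Proof. apply peqb_eq; auto. Qed.

Lemma is_edge_vZ W a b : is_edge (map vZ W) a b -> exists p q, a = vZ p /\ b = vZ q /\ is_edgeZ W p q = true.
Proof. intros [i [hi H]]. rewrite length_map in hi. rewrite !vtx_vZ, nxt_vZ in H.
  assert (Hin : In (nth i W (0,0,0)%Z, nth (nxtZ W i) W (0,0,0)%Z) (edgesZ W)).
  { unfold edgesZ. apply in_map_iff. exists i; split; auto. apply in_seq; lia. }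
  destruct H as [[<- <-]|[<- <-]].
  - do 2 eexists. split; [reflexivity|]. split; [reflexivity|]. unfold is_edgeZ. apply existsb_exists.
    eexists; split; [exact Hin|]. simpl. rewrite !peqb_refl. auto.
  - do 2 eexists. split; [reflexivity|]. split; [reflexivity|]. unfold is_edgeZ. apply existsb_exists.
    eexists; split; [exact Hin|]. simpl. rewrite !peqb_refl. rewrite orb_true_r. auto.
Qed.

Lemma edgesZ_spec W e : In e (edgesZ W) -> exists i, (i < length W)%nat /\ e = (nth i W (0,0,0)%Z, nth (nxtZ W i) W (0,0,0)%Z).
Proof. unfold edgesZ. rewrite in_map_iff. intros [i [<- h]]. apply in_seq in h. exists i; split; auto; lia. Qed.

Lemma is_edgeZ_vZ W p q : is_edgeZ W p q = true -> is_edge (map vZ W) (vZ p) (vZ q).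
Proof. unfold is_edgeZ. rewrite existsb_exists. intros [e [He H]]. destruct (edgesZ_spec W e He) as [i [hi ->]].
  exists i. rewrite length_map. split; auto. rewrite !vtx_vZ, nxt_vZ. simpl in H.
  rewrite orb_true_iff, !andb_true_iff, !peqb_eq in H. destruct H as [[-> ->]|[-> ->]]; auto. Qed.

Lemma is_edgeZ_sym W p q : is_edgeZ W p q = is_edgeZ W q p.
Proof. unfold is_edgeZ. induction (edgesZ W) as [|e l IH]; simpl; auto. rewrite IH. f_equal. apply orb_comm. Qed.

Lemma edgesZ_is_edge W e : In e (edgesZ W) -> is_edgeZ W (fst e) (snd e) = true.
Proof. intro h. unfold is_edgeZ. apply existsb_exists. exists e. split; auto. rewrite !peqb_refl. auto. Qed.

Definition edge_check (WZ : list (list pt3)) : bool :=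
  let n := length WZ in
  forallb (fun i => forallb (fun e =>
     Nat.eqb (length (filter (fun k => negb (Nat.eqb k i) && is_edgeZ (nth k WZ []) (fst e) (snd e)) (seq 0 n))) 1)
     (edgesZ (nth i WZ []))) (seq 0 n).

Lemma nth_mapvZ (WZ : list (list pt3)) i : nth i (map (map vZ) WZ) [] = map vZ (nth i WZ []).
Proof. apply (map_nth (map vZ) WZ [] i). Qed.

Theorem edge_sound WZ : edge_check WZ = true ->
  forall i, (i < length (map (map vZ) WZ))%nat -> forall a b, is_edge (nth i (map (map vZ) WZ) []) a b ->
  exists j, (j < length (map (map vZ) WZ))%nat /\ j <> i /\ is_edge (nth j (map (map vZ) WZ) []) a b /\
    forall k, (k < length (map (map vZ) WZ))%nat -> k <> i -> is_edge (nth k (map (map vZ) WZ) []) a b -> k = j.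
Proof.
  intros Hc i hi a b He. rewrite length_map in *. rewrite nth_mapvZ in He.
  destruct (is_edge_vZ _ _ _ He) as [p [q [-> [-> Hpq]]]].
  unfold is_edgeZ in Hpq. apply existsb_exists in Hpq. destruct Hpq as [e [Hin He2]].
  assert (Hsym : forall W, is_edgeZ W (fst e) (snd e) = is_edgeZ W p q).
  { intro W. rewrite orb_true_iff, !andb_true_iff, !peqb_eq in He2.
    destruct He2 as [[-> ->]|[-> ->]]; auto. apply is_edgeZ_sym. }
  unfold edge_check in Hc. rewrite forallb_forall in Hc. specialize (Hc i (proj2 (in_seq _ _ _) (conj (Nat.le_0_l _) hi))).
  rewrite forallb_forall in Hc. specialize (Hc e Hin). apply Nat.eqb_eq in Hc.
  set (F := filter _ _) in Hc.
  assert (HF : forall k, In k F <-> (k < length WZ)%nat /\ k <> i /\ is_edgeZ (nth k WZ []) p q = true).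
  { intro k. unfold F. rewrite filter_In, in_seq, andb_true_iff, negb_true_iff, Nat.eqb_neq, Hsym.
    split; [intros [h1 [h2 h3]]; split; [lia|auto] | intros [h1 [h2 h3]]; split; [lia|auto]]. }
  destruct F as [|j [|j' F']] eqn:EF; simpl in Hc; try discriminate.
  assert (Hj := proj1 (HF j) (or_introl eq_refl)). destruct Hj as [hj [hji Hj]].
  exists j. split; auto. split; auto. split. rewrite nth_mapvZ. apply is_edgeZ_vZ; auto.
  intros k hk hki Hk. rewrite nth_mapvZ in Hk. destruct (is_edge_vZ _ _ _ Hk) as [p' [q' [e1 [e2 Hk']]]].
  apply vZ_inj in e1. apply vZ_inj in e2. subst p' q'.
  assert (In k [j]) by (apply HF; auto). destruct H as [->|[]]; auto.
Qed.

Definition memb (i : nat) (l : list nat) : bool := existsb (Nat.eqb i) l.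
Lemma memb_In i l : memb i l = true <-> In i l.
Proof. unfold memb. rewrite existsb_exists. split. intros [x [h e]]. apply Nat.eqb_eq in e; subst; auto.
  intro h; exists i; split; auto; apply Nat.eqb_refl. Qed.
Fixpoint nodupb (l : list nat) : bool := match l with [] => true | x :: l' => negb (memb x l') && nodupb l' end.
Lemma nodupb_NoDup l : nodupb l = true -> NoDup l.
Proof. induction l as [|x l IH]; simpl; intro H. constructor.
  apply andb_true_iff in H. destruct H as [H1 H2]. constructor; auto.
  intro h. apply memb_In in h. rewrite h in H1. discriminate. Qed.

Definition shareZ (W W' : list pt3) : bool := existsb (fun e => is_edgeZ W' (fst e) (snd e)) (edgesZ W).
Lemma shareZ_ok W W' : shareZ W W' = true -> share_edge (map vZ W) (map vZ W').
Proof. unfold shareZ. rewrite existsb_exists. intros [e [He H]]. exists (vZ (fst e)), (vZ (snd e)).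
  split; apply is_edgeZ_vZ; auto. apply edgesZ_is_edge; auto. Qed.

Fixpoint walk (WZ : list (list pt3)) (S : list nat) (fuel : nat) (cur : nat) (used : list nat) : list nat :=
  match fuel with
  | O => rev used
  | Datatypes.S f => match find (fun k => negb (memb k used) && shareZ (nth cur WZ []) (nth k WZ [])) S with
           | Some k => walk WZ S f k (k :: used)
           | None => rev used
           end
  end.
Definition faces_with (WZ : list (list pt3)) (p : pt3) := filter (fun k => inb p (nth k WZ [])) (seq 0 (length WZ)).
Definition cycle_of (WZ : list (list pt3)) (p : pt3) : list nat :=
  match faces_with WZ p with [] => [] | f0 :: _ => walk WZ (faces_with WZ p) (length WZ) f0 [f0] end.

Definition vcheck1 (WZ : list (list pt3)) (p : pt3) : bool :=
  let L := cycle_of WZ p in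
  nodupb L && forallb (fun k => Nat.ltb k (length WZ)) L &&
  forallb (fun i => Bool.eqb (memb i L) (inb p (nth i WZ []))) (seq 0 (length WZ)) &&
  forallb (fun k => shareZ (nth (nth k L O) WZ []) (nth (nth (Nat.modulo (Datatypes.S k) (length L)) L O) WZ [])) (seq 0 (length L)).
Definition vertex_check (WZ : list (list pt3)) : bool := forallb (vcheck1 WZ) (concat WZ).

Theorem vertex_sound WZ : vertex_check WZ = true ->
  forall v, (exists V, In V (map (map vZ) WZ) /\ In v V) ->
    exists L : list nat, NoDup L /\
      (forall i, In i L <-> (i < length (map (map vZ) WZ))%nat /\ In v (nth i (map (map vZ) WZ) [])) /\
      forall k, (k < length L)%nat ->
        share_edge (nth (nth k L O) (map (map vZ) WZ) [])
                   (nth (nth (Nat.modulo (Datatypes.S k) (length L)) L O) (map (map vZ) WZ) []).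
Proof.
  intros Hc v [V [HV Hv]]. apply in_map_iff in HV. destruct HV as [W [<- HW]].
  apply in_map_iff in Hv. destruct Hv as [p [<- Hp]].
  unfold vertex_check in Hc. rewrite forallb_forall in Hc.
  assert (Hp' : In p (concat WZ)) by (apply in_concat; exists W; auto).
  specialize (Hc p Hp'). unfold vcheck1 in Hc. set (L := cycle_of WZ p) in Hc.
  rewrite !andb_true_iff in Hc. destruct Hc as [[[H1 H2] H3] H4].
  exists L. split. apply nodupb_NoDup; auto. split.
  - intro i. rewrite length_map, nth_mapvZ, In_vZ. rewrite forallb_forall in H2, H3. split.
    + intro hi. assert (hlt := H2 i hi). apply Nat.ltb_lt in hlt. split; auto.
      assert (E := H3 i (proj2 (in_seq _ _ _) (conj (Nat.le_0_l _) hlt))).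
      apply eqb_prop in E. apply inb_In. rewrite <- E. apply memb_In; auto.
    + intros [hi hin]. assert (E := H3 i (proj2 (in_seq _ _ _) (conj (Nat.le_0_l _) hi))).
      apply eqb_prop in E. apply memb_In. rewrite E. apply inb_In; auto.
  - intros k hk. rewrite !nth_mapvZ. apply shareZ_ok. rewrite forallb_forall in H4. apply H4. apply in_seq; lia.
Qed.

Definition px (p : pt3) := fst (fst p). Definition py (p : pt3) := snd (fst p). Definition pz (p : pt3) := snd p.
Definition btwF (i : coord) (a b : Z) : fm := FAnd (FGe i (Z.min a b)) (FLe i (Z.max a b)).
Definition segF (e : pt3 * pt3) : fm :=
  FAnd (btwF CX (px (fst e)) (px (snd e))) (FAnd (btwF CY (py (fst e)) (py (snd e))) (btwF CZ (pz (fst e)) (pz (snd e)))).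
Definition ptF (p : pt3) : fm := FAnd (FEq CX (px p)) (FAnd (FEq CY (py p)) (FEq CZ (pz p))).
Definition aligned (e : pt3 * pt3) : bool :=
  let '((x, y, z), (x', y', z')) := e in
  (Z.eqb y y' && Z.eqb z z' && negb (Z.eqb x x')) || (Z.eqb x x' && Z.eqb z z' && negb (Z.eqb y y')) ||
  (Z.eqb x x' && Z.eqb y y' && negb (Z.eqb z z')).

Definition common_edges (W W' : list pt3) := filter (fun e => aligned e && is_edgeZ W' (fst e) (snd e)) (edgesZ W).
Definition common_verts (W W' : list pt3) := filter (fun p => inb p W') W.

Definition interF (fi fj : pface) : fm :=
  Imp (FAnd (RegF fi) (RegF fj))
      (FOr (Ors (map segF (common_edges (polyZ fi) (polyZ fj)))) (Ors (map ptF (common_verts (polyZ fi) (polyZ fj))))).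

Definition dface := mkF CX 0 (SRect 0 1 0 1) true.

Definition inter_check (fs : list pface) : bool :=
  forallb (fun i => forallb (fun j => Nat.eqb i j || check (interF (nth i fs dface) (nth j fs dface)))
    (seq 0 (length fs))) (seq 0 (length fs)).

Lemma Rmin_IZR a b : IZR (Z.min a b) = Rmin (IZR a) (IZR b).
Proof. destruct (Z.le_ge_cases a b). rewrite Z.min_l by auto. rewrite Rmin_left; auto. apply IZR_le; auto.
  rewrite Z.min_r by lia. rewrite Rmin_right; auto. apply IZR_le; lia. Qed.
Lemma Rmax_IZR a b : IZR (Z.max a b) = Rmax (IZR a) (IZR b).
Proof. destruct (Z.le_ge_cases a b). rewrite Z.max_r by auto. rewrite Rmax_right; auto. apply IZR_le; auto.
  rewrite Z.max_l by lia. rewrite Rmax_left; auto. apply IZR_le; lia. Qed.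

Lemma btw_ok i a b x : evalR (btwF i a b) x -> IZR a <= gc i x <= IZR b \/ IZR b <= gc i x <= IZR a.
Proof. simpl. rewrite Rmin_IZR, Rmax_IZR. unfold Rmin, Rmax. destruct (Rle_dec (IZR a) (IZR b)); intros; [left|right]; lra. Qed.

Lemma Zneq_R a b : Z.eqb a b = false -> IZR a <> IZR b.
Proof. intros H e. apply eq_IZR in e. subst. rewrite Z.eqb_refl in H. discriminate. Qed.
Lemma Zeq_R a b : Z.eqb a b = true -> IZR a = IZR b.
Proof. intro H. apply Z.eqb_eq in H. subst; auto. Qed.

Lemma seg_ok e x : aligned e = true -> evalR (segF e) x -> on_seg (vZ (fst e)) (vZ (snd e)) x.
Proof.
  destruct e as [[[x1 y1] z1] [[x2 y2] z2]]. unfold aligned, segF, px, py, pz; simpl fst; simpl snd.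
  intros Ha [Hx [Hy Hz]]. apply btw_ok in Hx, Hy, Hz. simpl in Hx, Hy, Hz.
  rewrite !orb_true_iff, !andb_true_iff, !negb_true_iff in Ha.
  destruct Ha as [[[[e1 e2] e3]|[[e1 e2] e3]]|[[e1 e2] e3]]; apply Zeq_R in e1, e2; apply Zneq_R in e3.
  - apply (seg_u CY); simpl; lra.
  - apply (seg_u CX); simpl; lra.
  - apply (seg_v CX); simpl; lra.
Qed.

Lemma ptF_ok p x : evalR (ptF p) x -> x = vZ p.
Proof. destruct p as [[a b] c]. destruct x. simpl. intros [-> [-> ->]]. reflexivity. Qed.

Lemma nth_map_poly fs i : (i < length fs)%nat -> nth i (map poly fs) [] = poly (nth i fs dface).
Proof. intro h. rewrite (nth_indep _ [] (poly dface)) by (rewrite length_map; auto). apply map_nth. Qed.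

Theorem inter_sound fs : forallb wf_face fs = true -> inter_check fs = true ->
  forall i j, (i < length (map poly fs))%nat -> (j < length (map poly fs))%nat -> i <> j ->
  forall x, polygon_set (nth i (map poly fs) []) x -> polygon_set (nth j (map poly fs) []) x ->
  (exists a b, is_edge (nth i (map poly fs) []) a b /\ is_edge (nth j (map poly fs) []) a b /\ on_seg a b x) \/
  (In x (nth i (map poly fs) []) /\ In x (nth j (map poly fs) [])).
Proof.
  intros Hwf Hc i j hi hj hij x Hi Hj. rewrite length_map in hi, hj.
  rewrite (nth_map_poly fs i hi), (nth_map_poly fs j hj) in *. rewrite forallb_forall in Hwf.
  assert (Wi : wf_face (nth i fs dface) = true) by (apply Hwf; apply nth_In; auto).
  assert (Wj : wf_face (nth j fs dface) = true) by (apply Hwf; apply nth_In; auto).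
  apply (proj2 (face_poly _ Wi)) in Hi. apply (proj2 (face_poly _ Wj)) in Hj.
  unfold inter_check in Hc. rewrite forallb_forall in Hc.
  specialize (Hc i (proj2 (in_seq _ _ _) (conj (Nat.le_0_l _) hi))). rewrite forallb_forall in Hc.
  specialize (Hc j (proj2 (in_seq _ _ _) (conj (Nat.le_0_l _) hj))).
  apply orb_true_iff in Hc. destruct Hc as [Hc|Hc]. apply Nat.eqb_eq in Hc. contradiction.
  assert (H := check_sound _ Hc x). simpl in H. destruct H as [H|H]. exfalso; apply H; auto.
  set (fi := nth i fs dface) in *. set (fj := nth j fs dface) in *.
  destruct H as [H|H].
  - left. assert (Hex : exists e, In e (common_edges (polyZ fi) (polyZ fj)) /\ evalR (segF e) x).
    { clear -H. induction (common_edges (polyZ fi) (polyZ fj)) as [|e l IH]; simpl in H. destruct H.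
      destruct H as [H|H]. exists e; simpl; auto. destruct (IH H) as [e' [h1 h2]]. exists e'; simpl; auto. }
    destruct Hex as [e [He Hs]]. unfold common_edges in He. apply filter_In in He. destruct He as [He Hb].
    apply andb_true_iff in Hb. destruct Hb as [Ha Hej].
    exists (vZ (fst e)), (vZ (snd e)). split; [|split].
    + unfold poly. apply is_edgeZ_vZ. apply edgesZ_is_edge; auto.
    + unfold poly. apply is_edgeZ_vZ; auto.
    + apply seg_ok; auto.
  - right. assert (Hex : exists p, In p (common_verts (polyZ fi) (polyZ fj)) /\ evalR (ptF p) x).
    { clear -H. induction (common_verts (polyZ fi) (polyZ fj)) as [|e l IH]; simpl in H. destruct H.
      destruct H as [H|H]. exists e; simpl; auto. destruct (IH H) as [e' [h1 h2]]. exists e'; simpl; auto. }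
    destruct Hex as [p [Hp Hs]]. apply ptF_ok in Hs. subst x. unfold common_verts in Hp. apply filter_In in Hp.
    destruct Hp as [Hp Hb]. apply inb_In in Hb. unfold poly. split; apply In_vZ; auto.
Qed.

Definition facesP : list pface := [
  mkF CX 0 (SRect 0 2 0 2) false; mkF CY 0 (SRect 0 2 0 2) false; mkF CZ 0 (SRect 0 2 0 2) false;
  mkF CX 2 (SL1 0 1 2 0 1 2) true; mkF CY 2 (SL1 0 1 2 0 1 2) true; mkF CZ 2 (SL1 0 1 2 0 1 2) true;
  mkF CX 1 (SRect 1 2 1 2) true; mkF CY 1 (SRect 1 2 1 2) true; mkF CZ 1 (SRect 1 2 1 2) true ].
Definition facesQ : list pface := [
  mkF CX 0 (SL1 0 1 2 0 1 2) false; mkF CY 0 (SL1 0 1 2 0 1 2) false; mkF CZ 0 (SRect 0 2 0 2) false;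
  mkF CX 2 (SRect 0 2 0 1) true; mkF CY 2 (SRect 0 2 0 1) true; mkF CZ 2 (SRect 0 1 0 1) true;
  mkF CX 1 (SRect 0 1 1 2) true; mkF CY 1 (SRect 0 1 1 2) true; mkF CZ 1 (SL2 0 1 2 0 1 2) true ].

Definition SlabF (f : pface) (q : Z * Z * Z * Z) : fm :=
  FAnd (FGt (fax f) (fc f - 1)) (FAnd (FLt (fax f) (fc f + 1)) (oboxF (fax f) q)).
Definition USlabF (f : pface) : fm := Ors (map (SlabF f) (boxes (fsh f))).

Definition Reg (f : pface) : pset := evalR (RegF f).
Definition Rel (f : pface) : pset := evalR (RelF f).
Definition USlab (f : pface) : pset := evalR (USlabF f).

Lemma USlab_open f : is_open (USlab f).
Proof. apply openfm_ok. unfold USlabF. destruct f as [a c s g]; simpl. induction (boxes s) as [|q l IH]; simpl; auto.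
  destruct q as [[[u0 u1] v0] v1]; simpl. auto. Qed.

Lemma Rel_USlab f x : Rel f x -> USlab f x.
Proof. unfold Rel, USlab, RelF, USlabF, InnF. destruct f as [a c s g]; simpl. intros [hN H].
  induction (boxes s) as [|q l IH]; simpl in *; auto. destruct q as [[[u0 u1] v0] v1]; simpl in *.
  destruct H as [H|H]; [left|right; auto]. rewrite minus_IZR, plus_IZR. lra. Qed.

Lemma Rel_Reg f x : Rel f x -> Reg f x.
Proof. unfold Rel, Reg, RelF, RegF. simpl. intros [h H]. split; auto. apply InnF_RCF; auto. Qed.

Lemma Reg_plane f x : Reg f x -> gc (fax f) x = IZR (fc f).
Proof. unfold Reg, RegF; simpl. tauto. Qed.

Definition unitv (i : coord) : vec3 := match i with CX => mkv 1 0 0 | CY => mkv 0 1 0 | CZ => mkv 0 0 1 end.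
Definition Movable (S : pset) (x : vec3) (i : coord) :=
  forall d, 0 < d -> exists s, s <> 0 /\ Rabs s < d /\ S (vadd x (vscale s (unitv i))).

Lemma gc_move_same i x s : gc i (vadd x (vscale s (unitv i))) = gc i x + s.
Proof. destruct i; simpl; ring. Qed.
Lemma gc_move_other i j x s : i <> j -> gc j (vadd x (vscale s (unitv i))) = gc j x.
Proof. destruct i, j; simpl; intro h; try (exfalso; apply h; reflexivity); ring. Qed.

Lemma flat_not_movable (S : pset) x : flat_pt S x -> (forall i, Movable (boundary S) x i) -> False.
Proof.
  intros [bx [r [Pl [hr [[n [d [nz HPl]]] H]]]]] Hm.
  assert (Hx : dot n x = d). { apply HPl. apply H; auto. unfold dist, vnorm, dot, vsub; simpl.
    replace ((vx x - vx x) * (vx x - vx x) + (vy x - vy x) * (vy x - vy x) + (vz x - vz x) * (vz x - vz x)) with 0 by ring.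
    rewrite sqrt_0; auto. }
  assert (Hi : forall i, gc i n = 0).
  { intro i. destruct (Hm i r hr) as [s [s0 [hs Hb]]].
    assert (Hd : dist x (vadd x (vscale s (unitv i))) < r).
    { eapply Rle_lt_trans. apply dist_le_sum. destruct i; simpl;
      repeat match goal with |- context [Rabs (?u - (?u + ?k))] => replace (u - (u + k)) with (- k) by ring end;
      rewrite ?Rabs_Ropp, ?Rmult_0_r, ?Rmult_1_r, ?Rabs_R0; lra. }
    assert (E := proj1 (HPl _) (H _ Hb Hd)).
    assert (dot n (vadd x (vscale s (unitv i))) = dot n x + s * gc i n) by (destruct i, n; unfold dot; simpl; ring).
    assert (s * gc i n = 0) by lra. apply Rmult_integral in H1. destruct H1; auto. contradiction. }
  apply nz. pose proof (Hi CX) as e1. pose proof (Hi CY) as e2. pose proof (Hi CZ) as e3.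
  destruct n as [n1 n2 n3]. simpl in e1, e2, e3. subst. reflexivity.
Qed.

Lemma boxes_wf s : wf_shape s = true -> forall q, In q (boxes s) ->
  let '(u0, u1, v0, v1) := q in (u0 < u1)%Z /\ (v0 < v1)%Z.
Proof. destruct s; simpl; intro W; rewrite !andb_true_iff, !Z.ltb_lt in W; intros q Hq;
  repeat destruct Hq as [<-|Hq]; try destruct Hq; lia. Qed.

Lemma step_exists (lo hi xv d : R) : lo < hi -> lo <= xv <= hi -> 0 < d ->
  exists s, s <> 0 /\ Rabs s < d /\ lo <= xv + s <= hi.
Proof. intros h1 h2 h3. set (m := Rmin (d/2) ((hi - lo)/2)).
  assert (0 < m) by (apply Rmin_glb_lt; lra). assert (m <= d/2) by apply Rmin_l. assert (m <= (hi-lo)/2) by apply Rmin_r.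
  destruct (Rle_lt_dec xv ((lo + hi)/2)).
  - exists m. split. lra. split. rewrite Rabs_pos_eq; lra. lra.
  - exists (- m). split. lra. split. rewrite Rabs_Ropp, Rabs_pos_eq; lra. lra. Qed.

Lemma coord_ne a : ucd a <> a /\ vcd a <> a /\ ucd a <> vcd a.
Proof. destruct a; simpl; repeat split; discriminate. Qed.

Lemma Reg_movable f x : wf_face f = true -> Reg f x -> Movable (Reg f) x (ucd (fax f)) /\ Movable (Reg f) x (vcd (fax f)).
Proof.
  destruct f as [a c s g]. unfold wf_face, Reg, RegF, RCF; simpl. intros W [hN H].
  assert (Hb := boxes_wf s W). destruct (coord_ne a) as [n1 [n2 n3]].
  induction (boxes s) as [|q l IH]; simpl in *. destruct H.
  destruct H as [H|H].
  - specialize (Hb q (or_introl eq_refl)). destruct q as [[[u0 u1] v0] v1]. simpl in H. destruct Hb as [b1 b2].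
    apply IZR_lt in b1, b2. split; intros d hd.
    + destruct (step_exists (IZR u0) (IZR u1) (gc (ucd a) x) d) as [t [t0 [ht Ht]]]; try lra.
      exists t. split; auto. split; auto. rewrite !gc_move_other by auto. split; auto. left. simpl.
      rewrite gc_move_same, gc_move_other by auto. lra.
    + destruct (step_exists (IZR v0) (IZR v1) (gc (vcd a) x) d) as [t [t0 [ht Ht]]]; try lra.
      exists t. split; auto. split; auto. rewrite !gc_move_other by auto. split; auto. left. simpl.
      rewrite gc_move_same, gc_move_other by auto. lra.
  - destruct (IH H (fun q h => Hb q (or_intror h))) as [M1 M2]. split; intros d hd.
    + destruct (M1 d hd) as [t [t0 [ht [h1 h2]]]]. exists t; repeat split; auto.
    + destruct (M2 d hd) as [t [t0 [ht [h1 h2]]]]. exists t; repeat split; auto.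
Qed.

Lemma movable_mono (A B : pset) x i : (forall y, A y -> B y) -> Movable A x i -> Movable B x i.
Proof. intros H M d hd. destruct (M d hd) as [s [h1 [h2 h3]]]. exists s; auto. Qed.

Lemma axes_cover a b i : a <> b -> i = ucd a \/ i = vcd a \/ i = ucd b \/ i = vcd b.
Proof. destruct a, b, i; simpl; intro h; try (exfalso; apply h; reflexivity); auto. Qed.

Theorem flat_char (S : pset) (fs : list pface)
  (Hwf : forall f, In f fs -> wf_face f = true)
  (HB : forall x, boundary S x <-> exists f, In f fs /\ Reg f x)
  (Hslab : forall f g, In f fs -> In g fs -> f <> g -> forall x, USlab f x -> ~ Reg g x)
  (Hnf : forall f, In f fs -> forall x, Reg f x -> ~ Rel f x -> exists g, In g fs /\ fax g <> fax f /\ Reg g x) :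
  forall x, flat_pt S x <-> exists f, In f fs /\ Rel f x.
Proof.
  intro x. split.
  - intro Hf. destruct Hf as [bx Hr]. destruct (proj1 (HB x) bx) as [f [hf Rf]].
    destruct (classic (Rel f x)) as [R|nR]. exists f; auto.
    exfalso. destruct (Hnf f hf x Rf nR) as [g [hg [hax Rg]]].
    apply (flat_not_movable S x (conj bx Hr)). intro i.
    destruct (Reg_movable f x (Hwf f hf) Rf) as [M1 M2]. destruct (Reg_movable g x (Hwf g hg) Rg) as [M3 M4].
    assert (Hf' : forall y, Reg f y -> boundary S y) by (intros y hy; apply HB; exists f; auto).
    assert (Hg' : forall y, Reg g y -> boundary S y) by (intros y hy; apply HB; exists g; auto).
    destruct (axes_cover (fax f) (fax g) i (not_eq_sym hax)) as [e|[e|[e|e]]]; subst i;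
      [exact (movable_mono _ _ x _ Hf' M1)|exact (movable_mono _ _ x _ Hf' M2)
      |exact (movable_mono _ _ x _ Hg' M3)|exact (movable_mono _ _ x _ Hg' M4)].
  - intros [f [hf Rf]]. assert (bx : boundary S x) by (apply HB; exists f; split; auto; apply Rel_Reg; auto).
    split; auto. destruct (USlab_open f x (Rel_USlab f x Rf)) as [r [hr Hr]].
    exists r, (fun p => gc (fax f) p = IZR (fc f)). split; auto. split. apply plane_axis.
    intros y By dy. destruct (proj1 (HB y) By) as [g [hg Rg]].
    destruct (classic (f = g)) as [<-|ne]. apply Reg_plane; auto.
    exfalso. apply (Hslab f g hf hg ne y); auto.
Qed.

Lemma open_union (P : pface -> Prop) (U : pface -> pset) : (forall f, is_open (U f)) ->
  is_open (fun p => exists f, P f /\ U f p).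
Proof. intros H x [f [hf Ux]]. destruct (H f x Ux) as [r [hr Hr]]. exists r. split; auto.
  intros y hy. exists f; split; auto. Qed.

Lemma comp_stay (S : pset) (fs : list pface)
  (Hflat : forall x, flat_pt S x <-> exists f, In f fs /\ Rel f x)
  (Hslab : forall f g, In f fs -> In g fs -> f <> g -> forall x, USlab f x -> ~ Reg g x) :
  forall f, In f fs -> forall K, connected K -> (forall z, K z -> flat_pt S z) ->
  forall x0, K x0 -> Rel f x0 -> forall y, K y -> Rel f y.
Proof.
  intros f hf K HK Kf x0 K0 R0 y Ky.
  assert (HU := connected_sep K (USlab f) (fun p => exists g, (In g fs /\ g <> f) /\ USlab g p) HK (USlab_open f)
     (open_union (fun g => In g fs /\ g <> f) USlab USlab_open)).
  assert (C1 : forall z, K z -> USlab f z \/ (fun p => exists g, (In g fs /\ g <> f) /\ USlab g p) z).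
  { intros z Kz. destruct (proj1 (Hflat z) (Kf z Kz)) as [m [hm Rm]].
    destruct (classic (m = f)) as [->|ne]. left; apply Rel_USlab; auto. right. exists m. split; auto. apply Rel_USlab; auto. }
  assert (C2 : forall z, K z -> USlab f z -> (fun p => exists g, (In g fs /\ g <> f) /\ USlab g p) z -> False).
  { intros z Kz Uz [g [[hg ng] Ug]]. destruct (proj1 (Hflat z) (Kf z Kz)) as [m [hm Rm]].
    destruct (classic (m = f)) as [->|ne].
    + apply (Hslab g f hg hf ng z Ug). apply Rel_Reg; auto.
    + apply (Hslab f m hf hm (not_eq_sym ne) z Uz). apply Rel_Reg; auto. }
  assert (Uy : USlab f y) by (apply (HU C1 C2 x0); auto; apply Rel_USlab; auto).
  destruct (proj1 (Hflat y) (Kf y Ky)) as [m [hm Rm]].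
  destruct (classic (m = f)) as [->|ne]; auto.
  exfalso. apply (Hslab f m hf hm (not_eq_sym ne) y Uy). apply Rel_Reg; auto.
Qed.

Lemma dist_axis a x y : dist x y <= Rabs (gc a x - gc a y) + Rabs (gc (ucd a) x - gc (ucd a) y) + Rabs (gc (vcd a) x - gc (vcd a) y).
Proof. pose proof (dist_le_sum x y). destruct a; simpl; lra. Qed.

Lemma conv_strict (lo hi p m s : R) : lo <= p <= hi -> lo < m < hi -> 0 < s <= 1 -> lo < p + s * (m - p) < hi.
Proof. intros. assert (0 <= (1-s)*(p-lo)) by (apply Rmult_le_pos; lra).
  assert (0 < s*(m-lo)) by (apply Rmult_lt_0_compat; lra).
  assert (0 <= (1-s)*(hi-p)) by (apply Rmult_le_pos; lra).
  assert (0 < s*(hi-m)) by (apply Rmult_lt_0_compat; lra). split; nra. Qed.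
Lemma conv_btw_strict (lo hi a b t : R) : lo < a < hi -> lo < b < hi -> 0 <= t <= 1 -> lo < a + t * (b - a) < hi.
Proof. intros. assert (0 <= (1-t)*(a-lo)) by (apply Rmult_le_pos; lra).
  assert (0 <= t*(b-lo)) by (apply Rmult_le_pos; lra).
  assert (0 <= (1-t)*(hi-a)) by (apply Rmult_le_pos; lra).
  assert (0 <= t*(hi-b)) by (apply Rmult_le_pos; lra). split; nra. Qed.

Lemma approx_box a c u0 u1 v0 v1 x : u0 < u1 -> v0 < v1 -> gc a x = c ->
  u0 <= gc (ucd a) x <= u1 -> v0 <= gc (vcd a) x <= v1 ->
  forall r, 0 < r -> exists y, (gc a y = c /\ u0 < gc (ucd a) y /\ gc (ucd a) y < u1 /\ u0 < u1 /\ v0 < gc (vcd a) y /\ gc (vcd a) y < v1) /\ dist x y < r.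
Proof.
  intros hu hv hN hU hV r hr.
  set (L := u1 - u0 + (v1 - v0)). assert (hL : 0 < L) by (unfold L; lra).
  set (s := Rmin (1/2) (r / (2 * L))).
  assert (hs1 : 0 < s) by (apply Rmin_glb_lt; [lra| apply Rdiv_lt_0_compat; lra]).
  assert (hs2 : s <= 1/2) by apply Rmin_l. assert (hs3 : s <= r / (2 * L)) by apply Rmin_r.
  set (mu := (u0 + u1) / 2). set (mv := (v0 + v1) / 2).
  exists (pt a c (gc (ucd a) x + s * (mu - gc (ucd a) x)) (gc (vcd a) x + s * (mv - gc (vcd a) x))).
  rewrite gc_pt_n, gc_pt_u, gc_pt_v. split.
  - pose proof (conv_strict u0 u1 (gc (ucd a) x) mu s hU ltac:(unfold mu; lra) ltac:(lra)).
    pose proof (conv_strict v0 v1 (gc (vcd a) x) mv s hV ltac:(unfold mv; lra) ltac:(lra)). lra.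
  - eapply Rle_lt_trans. apply (dist_axis a). rewrite gc_pt_n, gc_pt_u, gc_pt_v.
    replace (gc a x - c) with 0 by lra. rewrite Rabs_R0.
    replace (gc (ucd a) x - (gc (ucd a) x + s * (mu - gc (ucd a) x))) with (s * (gc (ucd a) x - mu)) by ring.
    replace (gc (vcd a) x - (gc (vcd a) x + s * (mv - gc (vcd a) x))) with (s * (gc (vcd a) x - mv)) by ring.
    rewrite !Rabs_mult, (Rabs_pos_eq s) by lra.
    assert (Rabs (gc (ucd a) x - mu) <= u1 - u0) by (unfold mu, Rabs; destruct Rcase_abs; lra).
    assert (Rabs (gc (vcd a) x - mv) <= v1 - v0) by (unfold mv, Rabs; destruct Rcase_abs; lra).
    assert (s * Rabs (gc (ucd a) x - mu) <= s * (u1 - u0)) by (apply Rmult_le_compat_l; lra).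
    assert (s * Rabs (gc (vcd a) x - mv) <= s * (v1 - v0)) by (apply Rmult_le_compat_l; lra).
    assert (s * L <= r / 2). { apply (Rmult_le_reg_r (/ L)). apply Rinv_0_lt_compat; lra.
      replace (s * L * / L) with s by (field; lra). replace (r / 2 * / L) with (r / (2 * L)) by (field; lra). lra. }
    unfold L in *. lra.
Qed.

Lemma closure_ext (A B : pset) : (forall x, A x <-> B x) -> forall x, closure A x <-> closure B x.
Proof. intros H x. split; apply closure_mono; intro y; apply H. Qed.

Lemma closure_Rel f : wf_face f = true -> forall x, closure (Rel f) x <-> Reg f x.
Proof.
  intros W x. split.
  - intro H. apply RegF_closed. eapply closure_mono; [|exact H]. apply Rel_Reg.
  - destruct f as [a c s g]. unfold wf_face in W. simpl in W. assert (Hb := boxes_wf s W).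
    unfold Rel, Reg, RelF, RegF, RCF, InnF; simpl. intros [hN H] r hr.
    induction (boxes s) as [|q l IH]; simpl in *. destruct H.
    destruct H as [H|H].
    + specialize (Hb q (or_introl eq_refl)). destruct q as [[[u0 u1] v0] v1]. simpl in *. destruct Hb as [b1 b2].
      apply IZR_lt in b1, b2.
      destruct (approx_box a (IZR c) (IZR u0) (IZR u1) (IZR v0) (IZR v1) x b1 b2 hN ltac:(lra) ltac:(lra) r hr)
        as [y [Hy D]]. exists y. split; auto. split. tauto. left. lra.
    + destruct (IH (fun q h => Hb q (or_intror h)) H) as [y [[h1 h2] D]]. exists y. split; auto.
Qed.

Lemma box_convex a c u0 u1 v0 v1 :
  convex (fun p => gc a p = c /\ (u0 < gc (ucd a) p /\ gc (ucd a) p < u1 /\ v0 < gc (vcd a) p /\ gc (vcd a) p < v1)).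
Proof. intros y z [hy Hy] [hz Hz] t ht. rewrite !gc_vadd, !gc_vscale, !gc_vsub. split. rewrite hy, hz; ring.
  pose proof (conv_btw_strict u0 u1 (gc (ucd a) y) (gc (ucd a) z) t ltac:(lra) ltac:(lra) ht).
  pose proof (conv_btw_strict v0 v1 (gc (vcd a) y) (gc (vcd a) z) t ltac:(lra) ltac:(lra) ht). lra. Qed.

Lemma Rel_connected f : wf_face f = true -> connected (Rel f).
Proof.
  destruct f as [a c s g]. unfold wf_face, Rel, RelF, InnF; simpl. destruct s; simpl; intro W;
    rewrite ?andb_true_iff, ?Z.ltb_lt in W.
  - eapply connected_ext; [|apply convex_connected; apply (box_convex a (IZR c) (IZR u0) (IZR u1) (IZR v0) (IZR v1))].
    intro x; simpl; tauto.
  - eapply connected_ext; [|apply connected_union; [apply convex_connected; apply (box_convex a (IZR c) (IZR u0) (IZR u2) (IZR v0) (IZR v1))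
       |apply convex_connected; apply (box_convex a (IZR c) (IZR u0) (IZR u1) (IZR v0) (IZR v2))|]].
    intro x; simpl; tauto.
    destruct W as [[[W1 W2] W3] W4]. apply IZR_lt in W1, W2, W3, W4.
    exists (pt a (IZR c) ((IZR u0 + IZR u1)/2) ((IZR v0 + IZR v1)/2)). rewrite gc_pt_n, gc_pt_u, gc_pt_v. split; split; auto; lra.
  - eapply connected_ext; [|apply connected_union; [apply convex_connected; apply (box_convex a (IZR c) (IZR u1) (IZR u2) (IZR v0) (IZR v2))
       |apply convex_connected; apply (box_convex a (IZR c) (IZR u0) (IZR u2) (IZR v1) (IZR v2))|]].
    intro x; simpl; tauto.
    destruct W as [[[W1 W2] W3] W4]. apply IZR_lt in W1, W2, W3, W4.
    exists (pt a (IZR c) ((IZR u1 + IZR u2)/2) ((IZR v1 + IZR v2)/2)). rewrite gc_pt_n, gc_pt_u, gc_pt_v. split; split; auto; lra.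
Qed.

Lemma Rel_nonempty f : wf_face f = true -> exists x, Rel f x.
Proof.
  destruct f as [a c s g]. unfold wf_face, Rel, RelF, InnF; simpl. destruct s; simpl; intro W;
    rewrite ?andb_true_iff, ?Z.ltb_lt in W.
  - destruct W as [W1 W2]. apply IZR_lt in W1, W2.
    exists (pt a (IZR c) ((IZR u0 + IZR u1)/2) ((IZR v0 + IZR v1)/2)). rewrite gc_pt_n, gc_pt_u, gc_pt_v. split; auto. left; lra.
  - destruct W as [[[W1 W2] W3] W4]. apply IZR_lt in W1, W2, W3, W4.
    exists (pt a (IZR c) ((IZR u0 + IZR u1)/2) ((IZR v0 + IZR v1)/2)). rewrite gc_pt_n, gc_pt_u, gc_pt_v. split; auto. left; lra.
  - destruct W as [[[W1 W2] W3] W4]. apply IZR_lt in W1, W2, W3, W4.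
    exists (pt a (IZR c) ((IZR u1 + IZR u2)/2) ((IZR v1 + IZR v2)/2)). rewrite gc_pt_n, gc_pt_u, gc_pt_v. split; auto. left; lra.
Qed.

Theorem face_char (S : pset) (fs : list pface)
  (Hwf : forall f, In f fs -> wf_face f = true)
  (Hflat : forall x, flat_pt S x <-> exists f, In f fs /\ Rel f x)
  (Hslab : forall f g, In f fs -> In g fs -> f <> g -> forall x, USlab f x -> ~ Reg g x) :
  (forall F, face S F -> exists f, In f fs /\ forall x, F x <-> Reg f x) /\
  (forall f, In f fs -> face S (Reg f)).
Proof.
  assert (Hcomp : forall f, In f fs -> forall x0, Rel f x0 -> forall y,
            (exists K, connected K /\ (forall z, K z -> flat_pt S z) /\ K x0 /\ K y) <-> Rel f y).
  { intros f hf x0 R0 y. split.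
    - intros [K [HK [Kf [K0 Ky]]]]. exact (comp_stay S fs Hflat Hslab f hf K HK Kf x0 K0 R0 y Ky).
    - intro Ry. exists (Rel f). split. apply Rel_connected; auto. split; auto.
      intros z Rz. apply Hflat. exists f; auto. }
  split.
  - intros F [C [[x0 [F0 HC]] HF]]. destruct (proj1 (Hflat x0) F0) as [f [hf R0]].
    exists f. split; auto. intro x. rewrite HF. rewrite <- (closure_Rel f (Hwf f hf)).
    apply closure_ext. intro y. rewrite HC. apply Hcomp; auto.
  - intros f hf. exists (Rel f). split.
    + destruct (Rel_nonempty f (Hwf f hf)) as [x0 R0]. exists x0. split. apply Hflat; exists f; auto.
      intro y. symmetry. apply Hcomp; auto.
    + intro x. symmetry. apply closure_Rel; auto.
Qed.

Definition sgn (b : bool) : R := if b then 1 else -1.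
Definition nvec (f : pface) : vec3 := vscale (sgn (fsg f)) (unitv (fax f)).
Definition setc (i : coord) (c : cell) (c3 : cell3) : cell3 :=
  match i with CX => (c, snd (fst c3), snd c3) | CY => (fst (fst c3), c, snd c3) | CZ => (fst (fst c3), snd (fst c3), c) end.
Definition cout (f : pface) := if fsg f then Iv (fc f) else Iv (fc f - 1).
Definition cin (f : pface) := if fsg f then Iv (fc f - 1) else Iv (fc f).
Definition normal_check (sF : fm) (f : pface) : bool :=
  fm_ok sF && fm_ok (RelF f) && forallb (fun c3 => negb (evalC (RelF f) c3) ||
     (negb (evalC sF (setc (fax f) (cout f) c3)) && evalC sF (setc (fax f) (cin f) c3))) all3.

Lemma csem3_setc c3 x y a cl : csem3 c3 x -> csem cl (gc a y) -> (forall j, j <> a -> gc j y = gc j x) ->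
  csem3 (setc a cl c3) y.
Proof. intros [h1 [h2 h3]] hc hj. destruct a; unfold csem3; simpl in *.
  - pose proof (hj CY ltac:(discriminate)) as e1. pose proof (hj CZ ltac:(discriminate)) as e2. simpl in *.
    rewrite e1, e2. auto.
  - pose proof (hj CX ltac:(discriminate)) as e1. pose proof (hj CZ ltac:(discriminate)) as e2. simpl in *.
    rewrite e1, e2. auto.
  - pose proof (hj CX ltac:(discriminate)) as e1. pose proof (hj CY ltac:(discriminate)) as e2. simpl in *.
    rewrite e1, e2. auto. Qed.

Lemma move_eq1 x t f : vadd x (vscale t (nvec f)) = vadd x (vscale (t * sgn (fsg f)) (unitv (fax f))).
Proof. unfold nvec. destruct (fax f), x; unfold vadd, vscale; simpl; f_equal; ring. Qed.
Lemma move_eq2 x t f : vsub x (vscale t (nvec f)) = vadd x (vscale (- (t * sgn (fsg f))) (unitv (fax f))).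
Proof. unfold nvec. destruct (fax f), x; unfold vadd, vsub, vscale; simpl; f_equal; ring. Qed.

Lemma normal_sound sF f : normal_check sF f = true -> forall x, Rel f x -> forall t, 0 < t < 1 ->
  ~ evalR sF (vadd x (vscale t (nvec f))) /\ evalR sF (vsub x (vscale t (nvec f))).
Proof.
  intros Hc x Rx t ht. unfold normal_check in Hc. rewrite !andb_true_iff in Hc. destruct Hc as [[ok1 ok2] Hall].
  destruct (cell3_exists x) as [c3 [Hin Hs]]. rewrite forallb_forall in Hall. specialize (Hall c3 Hin).
  assert (ER : evalC (RelF f) c3 = true) by (apply (evalC_correct _ _ x ok2 Hs); auto).
  rewrite ER in Hall. simpl in Hall. rewrite andb_true_iff, negb_true_iff in Hall. destruct Hall as [Ho Hi].
  assert (hN : gc (fax f) x = IZR (fc f)) by (unfold Rel, RelF in Rx; simpl in Rx; tauto).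
  rewrite move_eq1, move_eq2. split.
  - intro H. rewrite <- (evalC_correct sF (setc (fax f) (cout f) c3) _ ok1) in H. rewrite H in Ho. discriminate.
    apply (csem3_setc c3 x); auto.
    + rewrite gc_move_same, hN. unfold cout, sgn; destruct (fsg f); simpl; repeat rewrite ?minus_IZR, ?plus_IZR; lra.
    + intros j hj. apply gc_move_other; auto.
  - rewrite <- (evalC_correct sF (setc (fax f) (cin f) c3) _ ok1). exact Hi.
    apply (csem3_setc c3 x); auto.
    + rewrite gc_move_same, hN. unfold cin, sgn; destruct (fsg f); simpl; repeat rewrite ?minus_IZR, ?plus_IZR; lra.
    + intros j hj. apply gc_move_other; auto.
Qed.

Lemma nvec_norm f : vnorm (nvec f) = 1.
Proof. unfold nvec, vnorm, dot, sgn. destruct (fsg f), (fax f); simpl;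
  match goal with |- sqrt ?e = 1 => replace e with 1 by ring end; apply sqrt_1. Qed.

Theorem outward (S : pset) (sF : fm) (fs : list pface) (f : pface) (hf : In f fs)
  (HS : forall x, S x <-> evalR sF x)
  (Hflat : forall x, flat_pt S x <-> exists f, In f fs /\ Rel f x)
  (Hslab : forall f g, In f fs -> In g fs -> f <> g -> forall x, USlab f x -> ~ Reg g x)
  (Hnc : normal_check sF f = true) (F : pset) (HF : forall x, F x <-> Reg f x) :
  outward_normal S F (nvec f).
Proof.
  split. apply nvec_norm. split.
  - exists (fun p => gc (fax f) p = IZR (fc f)). split. split. apply plane_axis.
    intros x Fx. apply Reg_plane. apply HF; auto.
    intros y z hy hz. unfold nvec, sgn, dot. destruct (fsg f), (fax f); simpl in *; rewrite hy, hz; ring.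
  - intros x Fx Flx. exists 1. split. lra. intros t ht.
    apply HF in Fx. destruct (proj1 (Hflat x) Flx) as [g [hg Rg]].
    destruct (classic (g = f)) as [->|ne].
    + destruct (normal_sound sF f Hnc x Rg t ht) as [h1 h2]. rewrite !HS. auto.
    + exfalso. apply (Hslab g f hg hf ne x); auto. apply Rel_USlab; auto.
Qed.

Definition coord_eqb (a b : coord) : bool :=
  match a, b with CX, CX | CY, CY | CZ, CZ => true | _, _ => false end.
Lemma coord_eqb_refl a : coord_eqb a a = true. Proof. destruct a; reflexivity. Qed.
Lemma coord_eqb_eq a b : coord_eqb a b = true -> a = b. Proof. destruct a, b; simpl; congruence. Qed.

Definition shape_eqb (s t : shape) : bool :=
  match s, t with
  | SRect a b c d, SRect a' b' c' d' => Z.eqb a a' && Z.eqb b b' && Z.eqb c c' && Z.eqb d d'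
  | SL1 a b c d e f, SL1 a' b' c' d' e' f' | SL2 a b c d e f, SL2 a' b' c' d' e' f' =>
      Z.eqb a a' && Z.eqb b b' && Z.eqb c c' && Z.eqb d d' && Z.eqb e e' && Z.eqb f f'
  | _, _ => false
  end.
Lemma shape_eqb_eq s t : shape_eqb s t = true -> s = t.
Proof. destruct s, t; simpl; intro H; try discriminate; rewrite !andb_true_iff, !Z.eqb_eq in H;
  repeat match goal with H : _ /\ _ |- _ => destruct H end; subst; reflexivity. Qed.
Definition pface_eqb (f g : pface) : bool :=
  coord_eqb (fax f) (fax g) && Z.eqb (fc f) (fc g) && shape_eqb (fsh f) (fsh g) && Bool.eqb (fsg f) (fsg g).
Lemma pface_eqb_eq f g : pface_eqb f g = true -> f = g.
Proof. destruct f, g; unfold pface_eqb; simpl. rewrite !andb_true_iff. intros [[[h1 h2] h3] h4].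
  apply coord_eqb_eq in h1. apply Z.eqb_eq in h2. apply shape_eqb_eq in h3. apply eqb_prop in h4. subst; reflexivity. Qed.

Definition slab_check (fs : list pface) : bool :=
  forallb (fun f => forallb (fun g => pface_eqb f g || check (FNot (FAnd (USlabF f) (RegF g)))) fs) fs.
Definition nf_check (fs : list pface) : bool :=
  forallb (fun f => check (Imp (FAnd (RegF f) (FNot (RelF f)))
     (Ors (map RegF (filter (fun g => negb (coord_eqb (fax g) (fax f))) fs))))) fs.
Definition bd_check (sF iF : fm) (fs : list pface) : bool :=
  check (Iff (FAnd sF (FNot iF)) (Ors (map RegF fs))).

Lemma Ors_map_iff {A} (F : A -> fm) (l : list A) x : evalR (Ors (map F l)) x <-> exists a, In a l /\ evalR (F a) x.
Proof. induction l as [|a l IH]; simpl. split; [intros []|intros [a [[] _]]].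
  rewrite IH. split. intros [H|[b [hb H]]]; [exists a|exists b]; auto.
  intros [b [[<-|hb] H]]; [left|right; exists b]; auto. Qed.

Lemma map_poly_eq fs : map poly fs = map (map vZ) (map polyZ fs).
Proof. rewrite map_map. reflexivity. Qed.

Theorem solid_ok (sF iF : fm) (fs : list pface)
  (h1 : forallb wf_face fs = true)
  (h2 : edge_check (map polyZ fs) = true)
  (h3 : vertex_check (map polyZ fs) = true)
  (h4 : inter_check fs = true)
  (h5 : bd_check sF iF fs = true)
  (h6 : slab_check fs = true)
  (h7 : nf_check fs = true)
  (h8 : forallb (normal_check sF) fs = true)
  (h9 : closedfm sF = true)
  (m1 : connected (evalR sF)) (m2 : bounded (evalR sF))
  (m3 : forall x, interior (evalR sF) x <-> evalR iF x)
  (m4 : forall x, evalR sF x -> closure (interior (evalR sF)) x) :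
  polyhedron (evalR sF) /\
  (forall F, face (evalR sF) F -> exists f, In f fs /\ forall x, F x <-> Reg f x) /\
  (forall f, In f fs -> face (evalR sF) (Reg f)) /\
  (forall f, In f fs -> forall F, (forall x, F x <-> Reg f x) -> outward_normal (evalR sF) F (nvec f)).
Proof.
  set (S := evalR sF) in *.
  assert (Hcl : is_closed S) by (apply closedfm_ok; auto).
  assert (Hwf : forall f, In f fs -> wf_face f = true) by (rewrite forallb_forall in h1; auto).
  assert (HB : forall x, boundary S x <-> exists f, In f fs /\ Reg f x).
  { intro x. unfold boundary. rewrite m3. unfold bd_check in h5. assert (H := check_sound _ h5 x).
    unfold Iff, Imp in H. simpl in H. unfold Reg. rewrite <- (Ors_map_iff RegF). split.
    - intros [c ni]. assert (Sx : S x) by (apply Hcl; auto). destruct H as [[H|H] _]; auto. exfalso; apply H; auto.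
    - intro R. destruct H as [_ [H|H]]. contradiction. split. apply closure_incl; tauto. tauto. }
  assert (Hslab : forall f g, In f fs -> In g fs -> f <> g -> forall x, USlab f x -> ~ Reg g x).
  { intros f g hf hg ne x U R. unfold slab_check in h6. rewrite forallb_forall in h6. specialize (h6 f hf).
    rewrite forallb_forall in h6. specialize (h6 g hg). apply orb_true_iff in h6. destruct h6 as [e|c].
    apply pface_eqb_eq in e. contradiction. apply (check_sound _ c x). simpl. split; auto. }
  assert (Hnf : forall f, In f fs -> forall x, Reg f x -> ~ Rel f x -> exists g, In g fs /\ fax g <> fax f /\ Reg g x).
  { intros f hf x R nR. unfold nf_check in h7. rewrite forallb_forall in h7. specialize (h7 f hf).
    assert (H := check_sound _ h7 x). unfold Imp in H. simpl in H. destruct H as [H|H].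
    exfalso; apply H; split; auto.
    apply Ors_map_iff in H. destruct H as [g [hg Rg]]. apply filter_In in hg. destruct hg as [hg e].
    exists g. split; auto. split; auto. intro E. rewrite E, coord_eqb_refl in e. discriminate. }
  assert (Hflat := flat_char S fs Hwf HB Hslab Hnf).
  destruct (face_char S fs Hwf Hflat Hslab) as [FC1 FC2].
  split; [|split; [exact FC1|split; [exact FC2|]]].
  - split; auto. split; auto. split; auto. split.
    { intro x. split; auto. intro H. apply Hcl. eapply closure_mono; [|exact H]. apply interior_incl. }
    exists (map poly fs). split; [|split; [|split; [|split]]].
    + intros V HV. apply in_map_iff in HV. destruct HV as [f [<- hf]]. apply face_poly; auto.
    + intro x. rewrite HB. split.
      * intros [f [hf R]]. exists (poly f). split. apply in_map; auto. apply face_poly; auto.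
      * intros [V [HV P]]. apply in_map_iff in HV. destruct HV as [f [<- hf]]. exists f. split; auto.
        apply face_poly; auto.
    + rewrite map_poly_eq. apply edge_sound; auto.
    + apply inter_sound; auto.
    + rewrite map_poly_eq. apply vertex_sound; auto.
  - intros f hf F HF. apply (outward S sF fs f hf (fun x => iff_refl _) Hflat Hslab); auto.
    rewrite forallb_forall in h8; auto.
Qed.

Definition bnds : fm := FAnd (FGe CX 0) (FAnd (FLe CX 2) (FAnd (FGe CY 0) (FAnd (FLe CY 2) (FAnd (FGe CZ 0) (FLe CZ 2))))).
Definition obnds : fm := FAnd (FGt CX 0) (FAnd (FLt CX 2) (FAnd (FGt CY 0) (FAnd (FLt CY 2) (FAnd (FGt CZ 0) (FLt CZ 2))))).
Definition sP : fm := FAnd bnds (FOr (FLe CX 1) (FOr (FLe CY 1) (FLe CZ 1))).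
Definition iP : fm := FAnd obnds (FOr (FLt CX 1) (FOr (FLt CY 1) (FLt CZ 1))).
Definition sQ : fm := FAnd bnds (FOr (FLe CZ 1) (FAnd (FLe CX 1) (FLe CY 1))).
Definition iQ : fm := FAnd obnds (FOr (FLt CZ 1) (FAnd (FLt CX 1) (FLt CY 1))).


Lemma interior_test (S : pset) x : interior S x -> exists d, 0 < d /\ (forall a b c, -1 <= a <= 1 -> -1 <= b <= 1 -> -1 <= c <= 1 -> S (mkv (vx x + d * a) (vy x + d * b) (vz x + d * c))).
Proof. intros [r [hr H]]. exists (r / 4). split. lra. intros a b c ha hb hc.
  apply Rabs_le in ha. apply Rabs_le in hb. apply Rabs_le in hc. apply H.
  eapply Rle_lt_trans. apply dist_le_sum. simpl.
  replace (vx x - (vx x + r / 4 * a)) with (- (r/4 * a)) by ring.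
  replace (vy x - (vy x + r / 4 * b)) with (- (r/4 * b)) by ring.
  replace (vz x - (vz x + r / 4 * c)) with (- (r/4 * c)) by ring.
  rewrite !Rabs_Ropp, !Rabs_mult, (Rabs_pos_eq (r/4)) by lra.
  assert (r/4 * Rabs a <= r/4) by (rewrite <- (Rmult_1_r (r/4)) at 2; apply Rmult_le_compat_l; lra).
  assert (r/4 * Rabs b <= r/4) by (rewrite <- (Rmult_1_r (r/4)) at 2; apply Rmult_le_compat_l; lra).
  assert (r/4 * Rabs c <= r/4) by (rewrite <- (Rmult_1_r (r/4)) at 2; apply Rmult_le_compat_l; lra).
  lra. Qed.

Lemma interior_fm (sF iF : fm) : openfm iF = true -> check (Imp iF sF) = true ->
  forall x, evalR iF x -> interior (evalR sF) x.
Proof. intros ho hc x h. apply (interior_open (evalR iF)); auto. apply openfm_ok; auto.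
  intros y hy. assert (H := check_sound _ hc y). unfold Imp in H. simpl in H. tauto. Qed.

Lemma conv_lt (hi p m s : R) : p <= hi -> m < hi -> 0 < s <= 1 -> p + s * (m - p) < hi.
Proof. intros. assert (0 <= (1-s)*(hi-p)) by (apply Rmult_le_pos; lra).
  assert (0 < s*(hi-m)) by (apply Rmult_lt_0_compat; lra). nra. Qed.
Lemma conv_gt (lo p m s : R) : lo <= p -> lo < m -> 0 < s <= 1 -> lo < p + s * (m - p).
Proof. intros. assert (0 <= (1-s)*(p-lo)) by (apply Rmult_le_pos; lra).
  assert (0 < s*(m-lo)) by (apply Rmult_lt_0_compat; lra). nra. Qed.

Lemma star_closure (S I : pset) (c : vec3) x :
  (forall s, 0 < s <= 1 -> I (mkv (vx x + s * (vx c - vx x)) (vy x + s * (vy c - vy x)) (vz x + s * (vz c - vz x)))) ->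
  (forall y, I y -> interior S y) -> closure (interior S) x.
Proof.
  intros HI HS r hr.
  set (L := Rabs (vx c - vx x) + Rabs (vy c - vy x) + Rabs (vz c - vz x) + 1).
  assert (hL : 0 < L) by (unfold L; pose proof (Rabs_pos (vx c - vx x)); pose proof (Rabs_pos (vy c - vy x)); pose proof (Rabs_pos (vz c - vz x)); lra).
  set (s := Rmin 1 (r / (2 * L))).
  assert (hs1 : 0 < s) by (apply Rmin_glb_lt; [lra|apply Rdiv_lt_0_compat; lra]).
  assert (hs2 : s <= 1) by apply Rmin_l. assert (hs3 : s <= r / (2 * L)) by apply Rmin_r.
  eexists. split. apply HS. apply (HI s). lra.
  eapply Rle_lt_trans. apply dist_le_sum. simpl.
  replace (vx x - (vx x + s * (vx c - vx x))) with (- (s * (vx c - vx x))) by ring.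
  replace (vy x - (vy x + s * (vy c - vy x))) with (- (s * (vy c - vy x))) by ring.
  replace (vz x - (vz x + s * (vz c - vz x))) with (- (s * (vz c - vz x))) by ring.
  rewrite !Rabs_Ropp, !Rabs_mult, (Rabs_pos_eq s) by lra.
  assert (s * L <= r / 2). { apply (Rmult_le_reg_r (/ L)). apply Rinv_0_lt_compat; lra.
      replace (s * L * / L) with s by (field; lra). replace (r / 2 * / L) with (r / (2 * L)) by (field; lra). lra. }
  unfold L in *. lra.
Qed.

Lemma box_convex3 (a1 b1 a2 b2 a3 b3 : R) :
  convex (fun p => a1 <= vx p <= b1 /\ a2 <= vy p <= b2 /\ a3 <= vz p <= b3).
Proof. intros y z [h1 [h2 h3]] [k1 [k2 k3]] t ht. simpl.
  split; [|split]; apply conv_btw; auto. Qed.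

Lemma bounded_cube (S : pset) : (forall x, S x -> 0 <= vx x <= 2 /\ 0 <= vy x <= 2 /\ 0 <= vz x <= 2) -> bounded S.
Proof. intro H. exists 6. intros x Sx. destruct (H x Sx) as [h1 [h2 h3]]. eapply Rle_trans. apply norm_le_sum.
  rewrite !Rabs_pos_eq by lra. lra. Qed.

Definition sPP := evalR sP.
Definition sQQ := evalR sQ.

Lemma P_interior x : interior (evalR sP) x <-> evalR iP x.
Proof. split.
  - intro H. destruct (interior_test _ x H) as [d [hd T]].
    assert (A1 := T (-1) 0 0). assert (A2 := T 1 0 0). assert (A3 := T 0 (-1) 0). assert (A4 := T 0 1 0).
    assert (A5 := T 0 0 (-1)). assert (A6 := T 0 0 1). assert (A7 := T 1 1 1).
    unfold sP, bnds, iP, obnds in *; simpl in *.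
    specialize (A1 ltac:(lra) ltac:(lra) ltac:(lra)). specialize (A2 ltac:(lra) ltac:(lra) ltac:(lra)).
    specialize (A3 ltac:(lra) ltac:(lra) ltac:(lra)). specialize (A4 ltac:(lra) ltac:(lra) ltac:(lra)).
    specialize (A5 ltac:(lra) ltac:(lra) ltac:(lra)). specialize (A6 ltac:(lra) ltac:(lra) ltac:(lra)).
    specialize (A7 ltac:(lra) ltac:(lra) ltac:(lra)).
    destruct A7 as [_ A7]. split. lra. destruct A7 as [A7|[A7|A7]]; [left|right;left|right;right]; lra.
  - apply interior_fm; reflexivity.
Qed.

Lemma Q_interior x : interior (evalR sQ) x <-> evalR iQ x.
Proof. split.
  - intro H. destruct (interior_test _ x H) as [d [hd T]].
    assert (A1 := T (-1) 0 0). assert (A2 := T 1 0 0). assert (A3 := T 0 (-1) 0). assert (A4 := T 0 1 0).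
    assert (A5 := T 0 0 (-1)). assert (A6 := T 0 0 1). assert (A7 := T 1 1 1).
    unfold sQ, bnds, iQ, obnds in *; simpl in *.
    specialize (A1 ltac:(lra) ltac:(lra) ltac:(lra)). specialize (A2 ltac:(lra) ltac:(lra) ltac:(lra)).
    specialize (A3 ltac:(lra) ltac:(lra) ltac:(lra)). specialize (A4 ltac:(lra) ltac:(lra) ltac:(lra)).
    specialize (A5 ltac:(lra) ltac:(lra) ltac:(lra)). specialize (A6 ltac:(lra) ltac:(lra) ltac:(lra)).
    specialize (A7 ltac:(lra) ltac:(lra) ltac:(lra)).
    destruct A7 as [_ A7]. split. lra. destruct A7 as [A7|[A7 A8]]; [left|right]; lra.
  - apply interior_fm; reflexivity.
Qed.

Lemma P_cl x : evalR sP x -> closure (interior (evalR sP)) x.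
Proof. intro H. apply (star_closure _ (evalR iP) (mkv (1/2) (1/2) (1/2))).
  - intros s hs. unfold sP, iP, bnds, obnds in *. simpl in *.
    destruct H as [[b1 [b2 [b3 [b4 [b5 b6]]]]] H].
    repeat split; try (apply conv_gt; lra); try (apply conv_lt; lra).
    destruct H as [H|[H|H]]; [left|right; left|right; right]; apply conv_lt; lra.
  - intros y hy. apply P_interior; auto.
Qed.

Lemma Q_cl x : evalR sQ x -> closure (interior (evalR sQ)) x.
Proof. intro H. apply (star_closure _ (evalR iQ) (mkv (1/2) (1/2) (1/2))).
  - intros s hs. unfold sQ, iQ, bnds, obnds in *. simpl in *.
    destruct H as [[b1 [b2 [b3 [b4 [b5 b6]]]]] H].
    repeat split; try (apply conv_gt; lra); try (apply conv_lt; lra).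
    destruct H as [H|[H H']]; [left|right; split]; apply conv_lt; lra.
  - intros y hy. apply Q_interior; auto.
Qed.

Lemma P_connected : connected (evalR sP).
Proof.
  eapply connected_ext; [| apply connected_union; [apply convex_connected; apply (box_convex3 0 1 0 2 0 2)
     | apply connected_union; [apply convex_connected; apply (box_convex3 0 2 0 1 0 2) | apply convex_connected; apply (box_convex3 0 2 0 2 0 1)|] | ]].
  - intro x. unfold sP, bnds. simpl. split.
    + intros [[h1 [h2 h3]]|[[h1 [h2 h3]]|[h1 [h2 h3]]]]; repeat split; lra.
    + intros [[b1 [b2 [b3 [b4 [b5 b6]]]]] [H|[H|H]]]; [left|right;left|right;right]; repeat split; lra.
  - exists (mkv 0 0 0). simpl. repeat split; lra.
  - exists (mkv 0 0 0). simpl. split. repeat split; lra. left. repeat split; lra.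
Qed.

Lemma Q_connected : connected (evalR sQ).
Proof.
  eapply connected_ext; [| apply connected_union; [apply convex_connected; apply (box_convex3 0 2 0 2 0 1)
     | apply convex_connected; apply (box_convex3 0 1 0 1 0 2) | ]].
  - intro x. unfold sQ, bnds. simpl. split.
    + intros [[h1 [h2 h3]]|[h1 [h2 h3]]]; repeat split; lra.
    + intros [[b1 [b2 [b3 [b4 [b5 b6]]]]] [H|[H H']]]; [left|right]; repeat split; lra.
  - exists (mkv 0 0 0). simpl. repeat split; lra.
Qed.

Lemma P_bounded : bounded (evalR sP).
Proof. apply bounded_cube. intros x H. unfold sP, bnds in H. simpl in H. repeat split; lra. Qed.
Lemma Q_bounded : bounded (evalR sQ).
Proof. apply bounded_cube. intros x H. unfold sQ, bnds in H. simpl in H. repeat split; lra. Qed.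

Definition P_ok := solid_ok sP iP facesP ltac:(vm_compute; reflexivity) ltac:(vm_compute; reflexivity)
  ltac:(vm_compute; reflexivity) ltac:(vm_compute; reflexivity) ltac:(vm_compute; reflexivity)
  ltac:(vm_compute; reflexivity) ltac:(vm_compute; reflexivity) ltac:(vm_compute; reflexivity)
  ltac:(vm_compute; reflexivity) P_connected P_bounded P_interior P_cl.
Definition Q_ok := solid_ok sQ iQ facesQ ltac:(vm_compute; reflexivity) ltac:(vm_compute; reflexivity)
  ltac:(vm_compute; reflexivity) ltac:(vm_compute; reflexivity) ltac:(vm_compute; reflexivity)
  ltac:(vm_compute; reflexivity) ltac:(vm_compute; reflexivity) ltac:(vm_compute; reflexivity)
  ltac:(vm_compute; reflexivity) Q_connected Q_bounded Q_interior Q_cl.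

Definition planeOf (g : pface) : pset := fun x => gc (fax g) x = IZR (fc g).
Definition ppm (t : pface * pt3) : pp_marker := (vZ (snd t), planeOf (fst t)).
Definition pnm (t : pface * pt3) : pn_marker := (vZ (snd t), nvec (fst t)).

Definition matchb (f g : pface) (p : pt3) : bool :=
  coord_eqb (fax f) (fax g) && Z.eqb (fc f) (fc g) && Bool.eqb (fsg f) (fsg g) &&
  fm_ok (RegF f) && evalC (RegF f) (Pt (fst (fst p)), Pt (snd (fst p)), Pt (snd p)).

Lemma matchb_ok f g p : matchb f g p = true ->
  fax f = fax g /\ fc f = fc g /\ fsg f = fsg g /\ Reg f (vZ p).
Proof. unfold matchb. rewrite !andb_true_iff. intros [[[[h1 h2] h3] h4] h5].
  apply coord_eqb_eq in h1. apply Z.eqb_eq in h2. apply eqb_prop in h3. split; [auto|split; [auto|split; [auto|]]].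
  unfold Reg. apply (evalC_correct _ (Pt (fst (fst p)), Pt (snd (fst p)), Pt (snd p)) _ h4); auto.
  destruct p as [[a b] c]. unfold csem3, vZ, csem; simpl. repeat split; reflexivity. Qed.

Lemma markups (S : pset) (fs : list pface) (trip : list (pface * pt3))
  (FC1 : forall F, face S F -> exists f, In f fs /\ forall x, F x <-> Reg f x)
  (FC2 : forall f, In f fs -> face S (Reg f))
  (ON : forall f, In f fs -> forall F, (forall x, F x <-> Reg f x) -> outward_normal S F (nvec f))
  (Ha : forallb (fun t => existsb (fun f => matchb f (fst t) (snd t)) fs) trip = true)
  (Hb : forallb (fun f => existsb (fun t => matchb f (fst t) (snd t)) trip) fs = true) :
  pp_markup S (map ppm trip) /\ pn_markup S (map pnm trip).
Proof.
  assert (HA : forall t, In t trip -> exists f, In f fs /\ fax f = fax (fst t) /\ fc f = fc (fst t) /\ fsg f = fsg (fst t) /\ Reg f (vZ (snd t))).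
  { intros t ht. rewrite forallb_forall in Ha. specialize (Ha t ht). apply existsb_exists in Ha.
    destruct Ha as [f [hf e]]. exists f. split; auto. apply matchb_ok; auto. }
  assert (HB : forall f, In f fs -> exists t, In t trip /\ fax f = fax (fst t) /\ fc f = fc (fst t) /\ fsg f = fsg (fst t) /\ Reg f (vZ (snd t))).
  { intros f hf. rewrite forallb_forall in Hb. specialize (Hb f hf). apply existsb_exists in Hb.
    destruct Hb as [t [ht e]]. exists t. split; auto. apply matchb_ok; auto. }
  assert (Hpl : forall f g, fax f = fax g -> fc f = fc g -> forall x, Reg f x -> planeOf g x).
  { intros f g e1 e2 x R. unfold planeOf. rewrite <- e1, <- e2. apply Reg_plane; auto. }
  assert (Hnv : forall f g, fax f = fax g -> fsg f = fsg g -> nvec f = nvec g).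
  { intros f g e1 e2. unfold nvec. rewrite e1, e2. reflexivity. }
  split; split; [| split | | split].
  - intros m hm. apply in_map_iff in hm. destruct hm as [t [<- ht]]. destruct (HA t ht) as [f [hf [e1 [e2 [e3 R]]]]].
    split. apply plane_axis. simpl. apply (Hpl f); auto.
  - intros m hm. apply in_map_iff in hm. destruct hm as [t [<- ht]]. destruct (HA t ht) as [f [hf [e1 [e2 [e3 R]]]]].
    exists (Reg f). split. apply FC2; auto. split. auto. split. apply plane_axis. intros x Rx. apply (Hpl f); auto.
  - intros F HF. destruct (FC1 F HF) as [f [hf HFf]]. destruct (HB f hf) as [t [ht [e1 [e2 [e3 R]]]]].
    exists (ppm t). split. apply in_map; auto. split. apply HFf; auto. split. apply plane_axis.
    intros x Fx. apply (Hpl f); auto. apply HFf; auto.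
  - intros m hm. apply in_map_iff in hm. destruct hm as [t [<- ht]]. apply nvec_norm.
  - intros m hm. apply in_map_iff in hm. destruct hm as [t [<- ht]]. destruct (HA t ht) as [f [hf [e1 [e2 [e3 R]]]]].
    exists (Reg f). split. apply FC2; auto. split. auto. simpl. rewrite <- (Hnv f); auto. apply ON; auto. tauto.
  - intros F HF. destruct (FC1 F HF) as [f [hf HFf]]. destruct (HB f hf) as [t [ht [e1 [e2 [e3 R]]]]].
    exists (pnm t). split. apply in_map; auto. split. apply HFf; auto. simpl. rewrite <- (Hnv f); auto.
Qed.

Definition markpts : list pt3 := [(0,0,0);(0,0,0);(0,0,0);(2,0,0);(0,2,0);(0,0,2);(1,1,1);(1,1,1);(1,1,1)]%Z.
Definition trip := combine facesP markpts.

Theorem mainTheorem3 :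
  exists P Q : pset,
    polyhedron P /\ polyhedron Q /\ ~ convex P /\ ~ convex Q /\
    (exists x, ~ (P x <-> Q x)) /\
    (exists M : list pp_marker, pp_markup P M /\ pp_markup Q M) /\
    (exists M : list pn_marker, pn_markup P M /\ pn_markup Q M).
Proof.
  destruct P_ok as [PP [PF1 [PF2 PON]]]. destruct Q_ok as [QP [QF1 [QF2 QON]]].
  destruct (markups _ _ trip PF1 PF2 PON ltac:(vm_compute; reflexivity) ltac:(vm_compute; reflexivity)) as [Mp1 Mp2].
  destruct (markups _ _ trip QF1 QF2 QON ltac:(vm_compute; reflexivity) ltac:(vm_compute; reflexivity)) as [Mq1 Mq2].
  exists (evalR sP), (evalR sQ). split; [auto|split; [auto|split; [|split; [|split; [|split]]]]].
  - intro Hc. specialize (Hc (mkv 2 2 1) (mkv 1 2 2)). unfold sP, bnds in Hc. simpl in Hc.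
    assert (H := Hc ltac:(repeat split; lra) ltac:(repeat split; lra) (1/2) ltac:(lra)).
    destruct H as [_ H]. lra.
  - intro Hc. specialize (Hc (mkv 2 2 1) (mkv 1 1 2)). unfold sQ, bnds in Hc. simpl in Hc.
    assert (H := Hc ltac:(split; [repeat split; lra| left; lra]) ltac:(split; [repeat split; lra| right; split; lra]) (1/2) ltac:(lra)).
    destruct H as [_ H]. lra.
  - exists (mkv (1/2) 2 2). unfold sP, sQ, bnds. simpl. intros [H _].
    assert (H1 : (0 <= 1/2 /\ 1/2 <= 2 /\ 0 <= 2 /\ 2 <= 2 /\ 0 <= 2 /\ 2 <= 2) /\ (1/2 <= 1 \/ 2 <= 1 \/ 2 <= 1)) by (split; [repeat split; lra| left; lra]).
    destruct (H H1) as [_ [h|[h h']]]; lra.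
  - exists (map ppm trip). auto.
  - exists (map pnm trip). auto.
Qed.
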